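(* Consider the pay-to-bid game described in the context with $n\ge 2$ players, and consider any symmetric subgame perfect equilibrium (SSPE), both in the version with re-entry and in the version without re-entry. Then: (I) In both versions, in any subgame starting at round $t\in\{1,2,3,\dots\}$, the equilibrium expected utility of a player $i$ whose wealth at the start of round $t$ is $w_{i,t}$ equals exactly $u(w_{i,t})$. (II) With re-entry, in every round each player strictly randomizes over $\{\text{Bid},\text{No Bid}\}$ and plays Bid with the stationary probability $$p = 1-\left(\frac{u(c)}{u(v-s)}\right)^{1/(n-1)};$$ the SSPE is unique and stationary. (III) Without re-entry, in every round $t$ each active player strictly randomizes over $\{\text{Bid},\text{No Bid}\}$ and plays Bid with probability $$p_t = 1-\left(\frac{u(c)}{u(v-s)}\right)^{1/(n_t-1)},$$ where $n_t$ is the number of active players in round $t$; the SSPE is unique and Markov perfect (it depends on the history only through $n_t$, besides the constants $v,s,c$).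
   Context: Pay-to-bid game: an object has monetary value $v>0$ that is common knowledge; there are $n\ge 2$ players; the bid fee is $c>0$ and the fixed sale price is $s\ge 0$, with $c<v-s$. Play proceeds in rounds $t=1,2,3,\dots$ with complete information (all past actions are observed). In each round every active player simultaneously chooses an action in $\{\text{Bid},\text{No Bid}\}$. Each time a player plays Bid she immediately pays $c$ to the seller. If exactly one active player bids in a round, she wins the object (receiving value $v$), pays the sale price $s$, and the game ends. If two or more players bid, the game continues to the next round. If no active player bids, the round is replayed (players resubmit their actions). With re-entry, all $n$ original players are active in every round regardless of history. Without re-entry, the active players in round $t+1$ are exactly those who played Bid in round $t$; $n_t$ denotes the number of active players in round $t$ ($n_1=n$). Players do not discount; each player's payoff is $u$ evaluated at her final wealth, where $u(x)=\frac{1-e^{-\rho x}}{\rho}$ with a constant $\rho<0$ (constant absolute risk-loving utility), or $u(x)=x$ in the risk-neutral case $\rho=0$. A player's wealth at the start of round $t$ is her initial wealth plus all gains minus all fees paid so far. A (behavioral) strategy maps each history to a probability of playing Bid; a symmetric subgame perfect equilibrium is a subgame perfect equilibrium in which all players use the same strategy. *)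

(* Defs.v *)
From Stdlib Require Import Reals Lra Lia List Arith.
Import ListNotations.
Open Scope R_scope.

(** * Pay-to-bid game (common value v, bid fee c, sale price s, n players) *)

Definition u (rho x : R) : R :=
  if Req_EM_T rho 0 then x else (1 - exp (- rho * x)) / rho.

(** An action profile of one stage: a list of length n of booleans;
    entry j is true iff player j plays Bid.  A history is the list of all
    (non-terminal) action profiles played so far, oldest first.  Stages in
    which nobody bids ("replays") are recorded in the history as well. *)
Definition profile := list bool.
Definition hist := list profile.

Definition nbids (a : profile) : nat := count_occ Bool.bool_dec a true.

Fixpoint profiles (n : nat) : list profile :=
  match n with
  | O => [ [] ]
  | S m => map (cons true) (profiles m) ++ map (cons false) (profiles m)
  end.

(** Update of the active set after a non-terminal stage with profile a.
    re = true : with re-entry (everybody always active).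
    re = false: without re-entry; if >= 2 players bid, exactly the bidders
    stay active; if nobody bids, the round is replayed with the same
    active set. *)
Definition next_active (re : bool) (act : list bool) (a : profile) : list bool :=
  if re then act else if (2 <=? nbids a)%nat then a else act.

Definition active (re : bool) (n : nat) (h : hist) : list bool :=
  fold_left (next_active re) h (repeat true n).

Definition nactive (re : bool) (n : nat) (h : hist) : nat :=
  nbids (active re n h).

Fixpoint valid_from (re : bool) (n : nat) (act : list bool) (h : hist) : Prop :=
  match h with
  | [] => True
  | a :: h' =>
      length a = n /\ nbids a <> 1%nat /\
      (forall j, nth j a false = true -> nth j act false = true) /\
      valid_from re n (next_active re act a) h'
  end.

Definition valid_hist (re : bool) (n : nat) (h : hist) : Prop :=
  valid_from re n (repeat true n) h.

Definition nbids_of (i : nat) (h : hist) : nat :=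
  length (filter (fun a : profile => nth i a false) h).

Definition wealth (c : R) (w0 : nat -> R) (i : nat) (h : hist) : R :=
  w0 i - c * INR (nbids_of i h).

(** Strategy profiles: sigma j h = probability that player j plays Bid
    after history h (behavioral strategies). *)
Definition strat_profile := nat -> hist -> R.

Definition is_strategy (tau : hist -> R) : Prop := forall h, 0 <= tau h <= 1.

Fixpoint prof_prob (j : nat) (act : list bool) (q : nat -> R) (a : profile) : R :=
  match act, a with
  | x :: act', b :: a' =>
      (if x then (if b then q j else 1 - q j) else (if b then 0 else 1))
      * prof_prob (S j) act' q a'
  | _, _ => 1
  end.

Definition sumR {A} (f : A -> R) (l : list A) : R :=
  fold_right (fun x acc => f x + acc) 0 l.

(** Expected utility of player i in the game truncated after K further
    stages, starting at history h, when the game is stopped at the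
    truncation point every player gets u of her current wealth.  A stage
    with exactly one bidder ends the game: the winner pays c and s and
    receives v. *)
Fixpoint tval (re : bool) (rho c v s : R) (n : nat) (w0 : nat -> R)
    (sigma : strat_profile) (i : nat) (K : nat) (h : hist) : R :=
  match K with
  | O => u rho (wealth c w0 i h)
  | S K' =>
      sumR (fun a : profile =>
        prof_prob 0 (active re n h) (fun j => sigma j h) a *
        (if (nbids a =? 1)%nat
         then u rho (wealth c w0 i h
                     + (if nth i a false then v - s - c else 0))
         else tval re rho c v s n w0 sigma i K' (h ++ [a])))
        (profiles n)
  end.

(** Extended reals {-oo} U R, needed since in the risk-neutral case a
    never-ending play has payoff -oo. *)
Inductive ER := Fin (r : R) | NegInf.

Definition ER_le (x y : ER) : Prop :=
  match x, y with
  | NegInf, _ => True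
  | Fin _, NegInf => False
  | Fin a, Fin b => a <= b
  end.

Definition conv_to (T : nat -> R) (x : ER) : Prop :=
  match x with
  | Fin L => Un_cv T L
  | NegInf => forall M, exists N, forall k, (N <= k)%nat -> T k < M
  end.

(** Expected utility of player i from history h under sigma equals x:
    the limit of the truncated expected utilities. *)
Definition has_value (re : bool) (rho c v s : R) (n : nat) (w0 : nat -> R)
    (sigma : strat_profile) (i : nat) (h : hist) (x : ER) : Prop :=
  conv_to (fun K => tval re rho c v s n w0 sigma i K h) x.

Definition deviate (sigma : strat_profile) (i : nat) (d : hist -> R) : strat_profile :=
  fun j => if (j =? i)%nat then d else sigma j.

Definition SSPE (re : bool) (rho c v s : R) (n : nat) (w0 : nat -> R)
    (tau : hist -> R) : Prop :=
  is_strategy tau /\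
  forall h, valid_hist re n h ->
  forall i, (i < n)%nat ->
  forall d, is_strategy d ->
  forall x y,
    has_value re rho c v s n w0 (deviate (fun _ => tau) i d) i h x ->
    has_value re rho c v s n w0 (fun _ => tau) i h y ->
    ER_le x y.

Definition pstar (rho c v s : R) (m : nat) : R :=
  1 - Rpower (u rho c / u rho (v - s)) (1 / INR (m - 1)).

(* Main.v *)
Require Import Defs.
From Stdlib Require Import Reals List.
From Stdlib Require Import Lra Lia Classical ClassicalEpsilon.
Import ListNotations.
Open Scope R_scope.

Lemma nbids_t a : nbids (true::a) = S (nbids a). Proof. reflexivity. Qed.
Lemma nbids_f a : nbids (false::a) = nbids a. Proof. reflexivity. Qed.

Lemma sumR_app {A} (f : A -> R) l1 l2 : sumR f (l1 ++ l2) = sumR f l1 + sumR f l2.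
Proof. induction l1; simpl; [ring|rewrite IHl1; ring]. Qed.
Lemma sumR_map {A B} (f : B -> R) (g : A -> B) l : sumR f (map g l) = sumR (fun x => f (g x)) l.
Proof. induction l; simpl; [ring|rewrite IHl; ring]. Qed.
Lemma sumR_plus {A} (f g : A -> R) l : sumR (fun x => f x + g x) l = sumR f l + sumR g l.
Proof. induction l; simpl; [ring|rewrite IHl; ring]. Qed.
Lemma sumR_scal {A} (k : R) (f : A -> R) l : sumR (fun x => k * f x) l = k * sumR f l.
Proof. induction l; simpl; [ring|rewrite IHl; ring]. Qed.
Lemma sumR_ext {A} (f g : A -> R) l : (forall x, In x l -> f x = g x) -> sumR f l = sumR g l.
Proof. induction l; simpl; intros H; [ring|]. rewrite H, IHl; auto. Qed.
Lemma sumR_le {A} (f g : A -> R) l : (forall x, In x l -> f x <= g x) -> sumR f l <= sumR g l.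
Proof. induction l; simpl; intros H; [lra|]. pose proof (H a (or_introl eq_refl)). pose proof (IHl (fun x Hx => H x (or_intror Hx))). lra. Qed.
Lemma sumR_const0 {A} l : sumR (fun _ : A => 0) l = 0.
Proof. induction l; simpl; [ring|rewrite IHl; ring]. Qed.
Lemma sumR_minus {A} (f g : A -> R) l : sumR (fun x => f x - g x) l = sumR f l - sumR g l.
Proof. induction l; simpl; [ring|rewrite IHl; ring]. Qed.
Lemma sumR_swap {A B} (f : A -> B -> R) l1 l2 :
  sumR (fun x => sumR (fun y => f x y) l2) l1 = sumR (fun y => sumR (fun x => f x y) l1) l2.
Proof.
  induction l1; simpl.
  - rewrite sumR_const0; auto.
  - rewrite IHl1. rewrite <- sumR_plus. reflexivity.
Qed.

Lemma profiles_length m a : In a (profiles m) -> length a = m.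
Proof.
  revert a; induction m; simpl; intros a H.
  - destruct H as [<-|[]]; reflexivity.
  - apply in_app_or in H; destruct H as [H|H]; apply in_map_iff in H;
    destruct H as [a' [<- H]]; simpl; rewrite (IHm a' H); reflexivity.
Qed.

Definition fct (x b : bool) (r : R) : R :=
  if x then (if b then r else 1 - r) else (if b then 0 else 1).

Lemma sum_prof_cons x act j q (F : profile -> R) m :
  sumR (fun a => prof_prob j (x::act) q a * F a) (profiles (S m)) =
  fct x true (q j) * sumR (fun a => prof_prob (S j) act q a * F (true::a)) (profiles m) +
  fct x false (q j) * sumR (fun a => prof_prob (S j) act q a * F (false::a)) (profiles m).
Proof.
  simpl profiles. rewrite sumR_app, !sumR_map, <- !sumR_scal.
  f_equal; apply sumR_ext; intros a _; simpl; unfold fct; ring.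
Qed.

Lemma sum_prob act j q : sumR (fun a => prof_prob j act q a) (profiles (length act)) = 1.
Proof.
  revert j; induction act as [|x act IH]; intros j; simpl.
  - ring.
  - rewrite sumR_app, !sumR_map. simpl.
    rewrite (sumR_scal _ (fun a => prof_prob (S j) act q a)).
    rewrite (sumR_scal _ (fun a => prof_prob (S j) act q a)).
    rewrite IH. destruct x; ring.
Qed.

Definition probs_ok (q : nat -> R) := forall k, 0 <= q k <= 1.

Lemma prob_nonneg act j q a : probs_ok q -> 0 <= prof_prob j act q a.
Proof.
  intros Hq. revert j a; induction act as [|x act IH]; intros j a; destruct a as [|b a]; simpl; try lra.
  apply Rmult_le_pos; [|apply IH].
  destruct x, b; specialize (Hq j); lra.
Qed.

Lemma prob_ext_ge act j q q' a : (forall k, (j <= k)%nat -> q k = q' k) ->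
  prof_prob j act q a = prof_prob j act q' a.
Proof.
  revert j a; induction act as [|x act IH]; intros j a H; destruct a as [|b a]; simpl; auto.
  rewrite H by lia. rewrite (IH (S j)); auto. intros; apply H; lia.
Qed.

Definition upd (q : nat -> R) (i : nat) (x : R) : nat -> R :=
  fun j => if Nat.eqb j i then x else q j.

Lemma prob_split act j q a i :
  prof_prob j act q a = q i * prof_prob j act (upd q i 1) a + (1 - q i) * prof_prob j act (upd q i 0) a.
Proof.
  revert j a; induction act as [|x act IH]; intros j a; destruct a as [|b a]; simpl; try ring.
  destruct (Nat.eqb_spec j i) as [Ej|Ej].
  - subst j.
    rewrite (prob_ext_ge act (S i) (upd q i 1) q), (prob_ext_ge act (S i) (upd q i 0) q).
    2,3: intros k Hk; unfold upd; destruct (Nat.eqb_spec k i); [lia|auto].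
    unfold upd; rewrite Nat.eqb_refl.
    destruct x, b; unfold fct; ring.
  - rewrite (IH (S j) a).
    assert (E1 : upd q i 1 j = q j) by (unfold upd; apply Nat.eqb_neq in Ej; rewrite Ej; auto).
    assert (E0 : upd q i 0 j = q j) by (unfold upd; apply Nat.eqb_neq in Ej; rewrite Ej; auto).
    rewrite E1, E0. ring.
Qed.

Lemma prob_nz_bid act j q a k : length a = length act -> prof_prob j act q a <> 0 -> nth k a false = true ->
  nth k act false = true /\ q (j + k)%nat <> 0.
Proof.
  revert j a k; induction act as [|x act IH]; intros j a k Hl Hp Hk; destruct a as [|b a]; simpl in Hl; try discriminate.
  - destruct k; discriminate.
  - simpl in Hp. destruct k as [|k]; simpl in Hk |- *.
    + subst b. destruct x; simpl in Hp.
      * split; auto. rewrite Nat.add_0_r. intro E; rewrite E in Hp; apply Hp; ring.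
      * exfalso; apply Hp; ring.
    + assert (Hp' : prof_prob (S j) act q a <> 0) by (intro E; rewrite E in Hp; apply Hp; ring).
      destruct (IH (S j) a k ltac:(lia) Hp' Hk) as [H1 H2]. split; auto.
      replace (j + S k)%nat with (S j + k)%nat by lia. auto.
Qed.

Lemma prob_nz_nobid act j q a k : length a = length act -> prof_prob j act q a <> 0 -> nth k a false = false ->
  nth k act false = true -> q (j + k)%nat <> 1.
Proof.
  revert j a k; induction act as [|x act IH]; intros j a k Hl Hp Hk Ha; destruct a as [|b a]; simpl in Hl; try discriminate.
  - destruct k; discriminate.
  - simpl in Hp. destruct k as [|k]; simpl in Hk, Ha |- *.
    + subst b x. simpl in Hp. rewrite Nat.add_0_r. intro E; rewrite E in Hp; apply Hp; ring.
    + assert (Hp' : prof_prob (S j) act q a <> 0) by (intro E; rewrite E in Hp; apply Hp; ring).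
      replace (j + S k)%nat with (S j + k)%nat by lia. eauto.
Qed.

Definition Ex j act q (F : profile -> R) : R :=
  sumR (fun a => prof_prob j act q a * F a) (profiles (length act)).

Lemma Ex_cons j x act q F : Ex j (x::act) q F =
  fct x true (q j) * Ex (S j) act q (fun a => F (true::a)) +
  fct x false (q j) * Ex (S j) act q (fun a => F (false::a)).
Proof. unfold Ex. simpl length. apply sum_prof_cons. Qed.

Lemma Ex_nil j q F : Ex j [] q F = F [].
Proof. unfold Ex; simpl; ring. Qed.

Lemma Ex_ext j act q F G : (forall a, F a = G a) -> Ex j act q F = Ex j act q G.
Proof. intros H; unfold Ex; apply sumR_ext; intros; rewrite H; auto. Qed.

Lemma Ex_const j act q k : Ex j act q (fun _ => k) = k.
Proof. unfold Ex. rewrite (sumR_ext _ (fun a => k * prof_prob j act q a)) by (intros; ring).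
  rewrite sumR_scal, sum_prob; ring. Qed.

Definition ind0 (a : profile) : R := if Nat.eqb (nbids a) 0 then 1 else 0.
Definition ind1 (a : profile) : R := if Nat.eqb (nbids a) 1 then 1 else 0.

Definition unif j (act : list bool) (q : nat -> R) (p : R) := forall k, nth k act false = true -> q (j + k)%nat = p.

Lemma unif_tail j x act q p : unif j (x::act) q p -> unif (S j) act q p.
Proof. intros H k Hk. replace (S j + k)%nat with (j + S k)%nat by lia. apply H; auto. Qed.

Lemma CF0 act j q p : unif j act q p -> Ex j act q ind0 = (1-p)^(nbids act).
Proof.
  revert j; induction act as [|x act IH]; intros j H.
  - rewrite Ex_nil; reflexivity.
  - rewrite Ex_cons.
    rewrite (Ex_ext _ _ _ (fun a => ind0 (true::a)) (fun _ => 0)) by (intros; reflexivity).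
    rewrite (Ex_ext _ _ _ (fun a => ind0 (false::a)) ind0) by (intros; reflexivity).
    rewrite Ex_const, IH by (eapply unif_tail; eauto).
    destruct x; unfold fct.
    + rewrite nbids_t. specialize (H 0%nat eq_refl). rewrite Nat.add_0_r in H. rewrite H. simpl; ring.
    + rewrite nbids_f. ring.
Qed.

Lemma CF1 act j q p : unif j act q p ->
  Ex j act q ind1 = INR (nbids act) * p * (1-p)^(pred (nbids act)).
Proof.
  revert j; induction act as [|x act IH]; intros j H.
  - rewrite Ex_nil; unfold ind1; simpl; ring.
  - rewrite Ex_cons.
    rewrite (Ex_ext _ _ _ (fun a => ind1 (true::a)) ind0) by (intros; unfold ind1, ind0; rewrite nbids_t; reflexivity).
    rewrite (Ex_ext _ _ _ (fun a => ind1 (false::a)) ind1) by (intros; reflexivity).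
    rewrite (CF0 _ _ _ p), IH by (eapply unif_tail; eauto).
    destruct x; unfold fct.
    + rewrite nbids_t. specialize (H 0%nat eq_refl). rewrite Nat.add_0_r in H. rewrite H.
      destruct (nbids act) as [|m]; simpl pred; rewrite ?S_INR; simpl; ring.
    + rewrite nbids_f. ring.
Qed.

Definition fixat j (act : list bool) (q : nat -> R) i (r p : R) :=
  nth i act false = true /\ q (j + i)%nat = r /\
  forall k, k <> i -> nth k act false = true -> q (j + k)%nat = p.

Lemma fixat_tail j x act q i r p : fixat j (x::act) q (S i) r p -> fixat (S j) act q i r p.
Proof.
  intros [H1 [H2 H3]]. split; [exact H1|split].
  - replace (S j + i)%nat with (j + S i)%nat by lia; auto.
  - intros k Hk Ha. replace (S j + k)%nat with (j + S k)%nat by lia. apply H3; auto.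
Qed.

Lemma fixat_head_unif j x act q r p : fixat j (x::act) q 0 r p -> unif (S j) act q p.
Proof.
  intros [H1 [H2 H3]] k Hk. replace (S j + k)%nat with (j + S k)%nat by lia. apply H3; auto.
Qed.

Lemma fixat_nb j act q i r p : fixat j act q i r p -> (1 <= nbids act)%nat.
Proof.
  intros [H1 _]. revert i H1; induction act as [|x act IH]; intros i H1.
  - destruct i; discriminate.
  - destruct i; simpl in H1.
    + subst; rewrite nbids_t; lia.
    + destruct x; [rewrite nbids_t; lia| rewrite nbids_f; eauto].
Qed.

Lemma CFr0 act j q i r p : fixat j act q i r p ->
  Ex j act q ind0 = (1-r) * (1-p)^(nbids act - 1).
Proof.
  revert j i; induction act as [|x act IH]; intros j i H.
  - destruct H as [H _]; destruct i; discriminate.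
  - rewrite Ex_cons.
    rewrite (Ex_ext _ _ _ (fun a => ind0 (true::a)) (fun _ => 0)) by (intros; reflexivity).
    rewrite (Ex_ext _ _ _ (fun a => ind0 (false::a)) ind0) by (intros; reflexivity).
    rewrite Ex_const.
    destruct i as [|i].
    + rewrite (CF0 _ _ _ p) by (eapply fixat_head_unif; eauto).
      destruct H as [H1 [H2 _]]. simpl in H1; subst x. rewrite Nat.add_0_r in H2. rewrite H2.
      unfold fct. rewrite nbids_t. simpl. rewrite Nat.sub_0_r. ring.
    + pose proof (fixat_tail _ _ _ _ _ _ _ H) as Ht.
      rewrite (IH _ _ Ht). pose proof (fixat_nb _ _ _ _ _ _ Ht).
      destruct x; unfold fct.
      * destruct H as [_ [_ H3]]. pose proof (H3 0%nat ltac:(lia) eq_refl) as Hq0. rewrite Nat.add_0_r in Hq0. rewrite Hq0.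
        rewrite nbids_t. replace (S (nbids act) - 1)%nat with (S (nbids act - 1)) by lia. simpl; ring.
      * rewrite nbids_f. ring.
Qed.

Lemma CFr1 act j q i r p : fixat j act q i r p ->
  Ex j act q ind1 = r * (1-p)^(nbids act - 1) +
     (1-r) * INR (nbids act - 1) * p * (1-p)^(pred (nbids act - 1)).
Proof.
  revert j i; induction act as [|x act IH]; intros j i H.
  - destruct H as [H _]; destruct i; discriminate.
  - rewrite Ex_cons.
    rewrite (Ex_ext _ _ _ (fun a => ind1 (true::a)) ind0) by (intros; unfold ind1, ind0; rewrite nbids_t; reflexivity).
    rewrite (Ex_ext _ _ _ (fun a => ind1 (false::a)) ind1) by (intros; reflexivity).
    destruct i as [|i].
    + rewrite (CF0 _ _ _ p), (CF1 _ _ _ p) by (eapply fixat_head_unif; eauto).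
      destruct H as [H1 [H2 _]]. simpl in H1; subst x. rewrite Nat.add_0_r in H2. rewrite H2.
      unfold fct. rewrite nbids_t. simpl. rewrite Nat.sub_0_r. ring.
    + pose proof (fixat_tail _ _ _ _ _ _ _ H) as Ht.
      rewrite (IH _ _ Ht), (CFr0 _ _ _ _ _ _ Ht). pose proof (fixat_nb _ _ _ _ _ _ Ht).
      destruct x; unfold fct.
      * destruct H as [_ [_ H3]]. pose proof (H3 0%nat ltac:(lia) eq_refl) as Hq0. rewrite Nat.add_0_r in Hq0. rewrite Hq0.
        rewrite nbids_t. replace (S (nbids act) - 1)%nat with (S (nbids act - 1)) by lia.
        destruct (nbids act - 1)%nat as [|m]; simpl pred; rewrite ?S_INR; simpl; ring.
      * rewrite nbids_f. ring.
Qed.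

Definition EE (rho x : R) : R := exp (- rho * x).

Lemma EE_pos rho x : 0 < EE rho x.
Proof. apply exp_pos. Qed.

Lemma EE_mono rho x y : rho <= 0 -> x <= y -> EE rho x <= EE rho y.
Proof. intros. unfold EE. destruct (Req_dec rho 0). subst; replace (-0*x) with 0 by ring; replace (-0*y) with 0 by ring; lra.
  destruct (Req_dec x y) as [E|E]; [subst; lra|]. left. apply exp_increasing. nra. Qed.

Lemma EE_add rho a b : EE rho (a + b) = EE rho a * EE rho b.
Proof. unfold EE. rewrite <- exp_plus. f_equal; ring. Qed.

Lemma u_add rho a b : u rho (a + b) = u rho a + EE rho a * u rho b.
Proof.
  unfold u, EE. destruct (Req_EM_T rho 0).
  - subst. replace (-0*a) with 0 by ring. rewrite exp_0; ring.
  - replace (- rho * (a + b)) with (- rho * a + - rho * b) by ring. rewrite exp_plus. field. auto.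
Qed.

Lemma u_0 rho : u rho 0 = 0.
Proof. unfold u. destruct (Req_EM_T rho 0); auto. replace (-rho*0) with 0 by ring. rewrite exp_0. field; auto. Qed.

Lemma u_lt rho x y : rho <= 0 -> x < y -> u rho x < u rho y.
Proof.
  intros Hr Hxy. unfold u. destruct (Req_EM_T rho 0); auto.
  assert (rho < 0) by lra.
  assert (exp (-rho*x) < exp (-rho*y)) by (apply exp_increasing; nra).
  apply Rmult_lt_reg_r with (-rho); [lra|].
  replace ((1 - exp (- rho * x)) / rho * - rho) with (exp (-rho*x) - 1) by (field; lra).
  replace ((1 - exp (- rho * y)) / rho * - rho) with (exp (-rho*y) - 1) by (field; lra). lra.
Qed.

Lemma u_le rho x y : rho <= 0 -> x <= y -> u rho x <= u rho y.
Proof. intros Hr H. destruct H as [H|H]; [left; apply u_lt; auto| subst; lra]. Qed.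

Lemma u_pos rho x : rho <= 0 -> 0 < x -> 0 < u rho x.
Proof. intros. rewrite <- (u_0 rho). apply u_lt; auto. Qed.

Lemma u_neg rho x : rho <= 0 -> x < 0 -> u rho x < 0.
Proof. intros. rewrite <- (u_0 rho). apply u_lt; auto. Qed.

Lemma u_lb rho x : rho < 0 -> 1 / rho < u rho x.
Proof.
  intros Hr. unfold u. destruct (Req_EM_T rho 0); [lra|].
  pose proof (exp_pos (-rho*x)).
  apply Rmult_lt_reg_r with (-rho); [lra|].
  replace (1 / rho * - rho) with (-1) by (field; lra).
  replace ((1 - exp (- rho * x)) / rho * - rho) with (exp (-rho*x) - 1) by (field; lra). lra.
Qed.

Lemma active_app re n h a : active re n (h ++ [a]) = next_active re (active re n h) a.
Proof. unfold active. rewrite fold_left_app. reflexivity. Qed.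

Definition WF (n : nat) (h : hist) := Forall (fun a : profile => length a = n) h.

Lemma WF_app n h a : WF n h -> length a = n -> WF n (h ++ [a]).
Proof. intros. unfold WF. apply Forall_app; split; auto. Qed.

Lemma length_active re n h : WF n h -> length (active re n h) = n.
Proof.
  unfold active. intros H. assert (length (repeat true n) = n) by apply repeat_length.
  revert H0. generalize (repeat true n). induction H; intros act Hl; simpl; auto.
  apply IHForall. unfold next_active. destruct re; auto. destruct (2 <=? nbids x)%nat; auto.
Qed.

Lemma nbids_repeat n : nbids (repeat true n) = n.
Proof. induction n; auto. change (repeat true (S n)) with (true :: repeat true n). rewrite nbids_t; auto. Qed.

Lemma nactive_ge2 re n h : (2 <= n)%nat -> (2 <= nbids (active re n h))%nat.
Proof.
  intros Hn. unfold active. assert (2 <= nbids (repeat true n))%nat by (rewrite nbids_repeat; auto).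
  revert H. generalize (repeat true n). induction h; intros act H; simpl; auto.
  apply IHh. unfold next_active. destruct re; auto. destruct (Nat.leb_spec 2 (nbids a)); auto.
Qed.

Lemma active_re n h : active true n h = repeat true n.
Proof. unfold active. generalize (repeat true n). induction h; simpl; auto. Qed.

Lemma nbids_of_app i h a : nbids_of i (h ++ [a]) = (nbids_of i h + (if nth i a false then 1 else 0))%nat.
Proof. unfold nbids_of. rewrite filter_app, length_app. simpl. destruct (nth i a false); reflexivity. Qed.

Lemma wealth_app c w0 i h a : wealth c w0 i (h ++ [a]) = wealth c w0 i h - (if nth i a false then c else 0).
Proof. unfold wealth. rewrite nbids_of_app, plus_INR. destruct (nth i a false); simpl; ring. Qed.

Lemma valid_from_app re n act h a : valid_from re n act h ->
  length a = n -> nbids a <> 1%nat ->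
  (forall j, nth j a false = true -> nth j (fold_left (next_active re) h act) false = true) ->
  valid_from re n act (h ++ [a]).
Proof.
  revert act; induction h as [|b h IH]; intros act Hv Hl Hn Hj; simpl in *.
  - repeat split; auto.
  - destruct Hv as [H1 [H2 [H3 H4]]]. repeat split; auto.
Qed.

Lemma valid_WF re n h : valid_hist re n h -> WF n h.
Proof.
  unfold valid_hist. generalize (repeat true n). induction h; intros act H; constructor.
  - destruct H; auto.
  - destruct H as [_ [_ [_ H]]]. eapply IHh; eauto.
Qed.

Lemma valid_step re n h a q : valid_hist re n h -> In a (profiles n) -> nbids a <> 1%nat ->
  prof_prob 0 (active re n h) q a <> 0 -> valid_hist re n (h ++ [a]).
Proof.
  intros Hv Ha Hn Hp. apply valid_from_app; auto.
  - apply profiles_length; auto.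
  - intros j Hj. change (nth j (active re n h) false = true).
    refine (proj1 (prob_nz_bid (active re n h) 0 q a j _ Hp Hj)).
    rewrite length_active by (eapply valid_WF; eauto). apply profiles_length; auto.
Qed.

Lemma tval_S re rho c v s n w0 sigma i K h :
  tval re rho c v s n w0 sigma i (S K) h =
  sumR (fun a => prof_prob 0 (active re n h) (fun j => sigma j h) a *
     (if (nbids a =? 1)%nat then u rho (wealth c w0 i h + (if nth i a false then v - s - c else 0))
      else tval re rho c v s n w0 sigma i K (h ++ [a]))) (profiles n).
Proof. reflexivity. Qed.

Lemma tval_const re rho c v s n w0 sigma i (Inv : hist -> Prop) :
  (forall h a, Inv h -> In a (profiles n) -> nbids a <> 1%nat ->
     prof_prob 0 (active re n h) (fun j => sigma j h) a <> 0 -> Inv (h ++ [a])) ->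
  (forall h, Inv h ->
     sumR (fun a => prof_prob 0 (active re n h) (fun j => sigma j h) a *
       (if (nbids a =? 1)%nat then u rho (wealth c w0 i h + (if nth i a false then v - s - c else 0))
        else u rho (wealth c w0 i (h ++ [a])))) (profiles n) = u rho (wealth c w0 i h)) ->
  forall K h, Inv h -> tval re rho c v s n w0 sigma i K h = u rho (wealth c w0 i h).
Proof.
  intros Hcl Hb K. induction K; intros h Hh; [reflexivity|].
  rewrite tval_S, <- (Hb h Hh). apply sumR_ext. intros a Ha.
  destruct (Req_dec (prof_prob 0 (active re n h) (fun j => sigma j h) a) 0) as [E|E].
  - rewrite E; ring.
  - destruct (Nat.eqb_spec (nbids a) 1); auto. rewrite IHK; auto.
Qed.

Lemma Ex_lin j act q F G al be : Ex j act q (fun a => al * F a + be * G a) = al * Ex j act q F + be * Ex j act q G.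
Proof. unfold Ex. rewrite <- !sumR_scal, <- sumR_plus. apply sumR_ext; intros; ring. Qed.

Lemma Ex_ext_nz j act q F G : (forall a, In a (profiles (length act)) -> prof_prob j act q a <> 0 -> F a = G a) ->
  Ex j act q F = Ex j act q G.
Proof. intros H; unfold Ex; apply sumR_ext; intros a Ha.
  destruct (Req_dec (prof_prob j act q a) 0) as [E|E]; [rewrite E; ring| rewrite H; auto]. Qed.

Lemma Ex_split j act q F i : Ex j act q F = q i * Ex j act (upd q i 1) F + (1 - q i) * Ex j act (upd q i 0) F.
Proof. unfold Ex. rewrite <- !sumR_scal, <- sumR_plus. apply sumR_ext; intros a _.
  rewrite (prob_split act j q a i). ring. Qed.

Lemma Ex_le j act q F G : probs_ok q ->
  (forall a, In a (profiles (length act)) -> prof_prob j act q a <> 0 -> F a <= G a) ->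
  Ex j act q F <= Ex j act q G.
Proof. intros Hq H; unfold Ex; apply sumR_le; intros a Ha.
  destruct (Req_dec (prof_prob j act q a) 0) as [E|E]; [rewrite E; lra|].
  apply Rmult_le_compat_l; [apply prob_nonneg; auto| auto]. Qed.

Lemma upd_eq q i x : upd q i x i = x.
Proof. unfold upd; rewrite Nat.eqb_refl; auto. Qed.
Lemma upd_neq q i x k : k <> i -> upd q i x k = q k.
Proof. intros; unfold upd. apply Nat.eqb_neq in H; rewrite H; auto. Qed.

Lemma probs_ok_upd q i x : probs_ok q -> 0 <= x <= 1 -> probs_ok (upd q i x).
Proof. intros H Hx k. unfold upd. destruct (k =? i)%nat; auto. Qed.

Lemma nz_upd1 act q a i : length a = length act -> nth i act false = true ->
  prof_prob 0 act (upd q i 1) a <> 0 -> nth i a false = true.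
Proof. intros Hl Ha Hp. destruct (nth i a false) eqn:E; auto.
  exfalso; apply (prob_nz_nobid act 0 (upd q i 1) a i Hl Hp E Ha). simpl. apply upd_eq. Qed.

Lemma nz_upd0 act q a i : length a = length act ->
  prof_prob 0 act (upd q i 0) a <> 0 -> nth i a false = false.
Proof. intros Hl Hp. destruct (nth i a false) eqn:E; auto.
  exfalso; apply (proj2 (prob_nz_bid act 0 (upd q i 0) a i Hl Hp E)). simpl. apply upd_eq. Qed.

Lemma nz_inact act q a i : length a = length act -> nth i act false = false ->
  prof_prob 0 act q a <> 0 -> nth i a false = false.
Proof. intros Hl Ha Hp. destruct (nth i a false) eqn:E; auto.
  rewrite (proj1 (prob_nz_bid act 0 q a i Hl Hp E)) in Ha; discriminate. Qed.

Lemma fixat_upd act q i r p : nth i act false = true -> (forall k, k <> i -> q k = p) ->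
  fixat 0 act (upd q i r) i r p.
Proof. intros H1 H2. split; auto. split; [apply upd_eq|]. intros k Hk _. simpl. rewrite upd_neq; auto. Qed.

Definition xr rho c v s := u rho c / u rho (v - s).

Lemma xr_bounds rho c v s : 0 < c -> c < v - s -> rho <= 0 -> 0 < xr rho c v s < 1.
Proof. intros. unfold xr. pose proof (u_pos rho c H1 H). pose proof (u_lt rho c (v-s) H1 H0).
  split. apply Rdiv_lt_0_compat; lra. apply Rmult_lt_reg_r with (u rho (v-s)); [lra|].
  unfold Rdiv. rewrite Rmult_assoc, Rinv_l by lra. lra. Qed.

Lemma pstar_one_minus rho c v s m : 1 - pstar rho c v s m = Rpower (xr rho c v s) (1 / INR (m - 1)).
Proof. unfold pstar, xr. ring. Qed.

Lemma pstar_pow rho c v s m : 0 < c -> c < v - s -> rho <= 0 -> (2 <= m)%nat ->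
  (1 - pstar rho c v s m) ^ (m - 1) = xr rho c v s.
Proof.
  intros. rewrite pstar_one_minus. pose proof (xr_bounds rho c v s H H0 H1).
  rewrite <- Rpower_pow by (unfold Rpower; apply exp_pos).
  rewrite Rpower_mult. replace (1 / INR (m - 1) * INR (m - 1)) with 1. apply Rpower_1; lra.
  field. apply not_0_INR. lia.
Qed.

Lemma pstar_bounds rho c v s m : 0 < c -> c < v - s -> rho <= 0 -> (2 <= m)%nat ->
  0 < pstar rho c v s m < 1.
Proof.
  intros. pose proof (xr_bounds rho c v s H H0 H1).
  assert (0 < 1 / INR (m-1)). { apply Rdiv_lt_0_compat; [lra|]. apply lt_0_INR. lia. }
  unfold pstar. fold (xr rho c v s). unfold Rpower. split.
  - assert (exp (1 / INR (m - 1) * ln (xr rho c v s)) < 1); [|lra].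
    assert (ln (xr rho c v s) < 0).
    { rewrite <- ln_1. apply ln_increasing; lra. }
    rewrite <- exp_0 at 2. apply exp_increasing.
    rewrite <- (Rmult_0_r (1/INR(m-1))). apply Rmult_lt_compat_l; auto.
  - pose proof (exp_pos (1 / INR (m - 1) * ln (xr rho c v s))). lra.
Qed.

Lemma pstar_strat rho c v s m : 0 < c -> c < v - s -> rho <= 0 -> 0 <= pstar rho c v s m <= 1.
Proof.
  intros. destruct (Nat.leb_spec 2 m). pose proof (pstar_bounds rho c v s m H H0 H1 H2); lra.
  unfold pstar. assert (E: INR (m-1) = 0) by (replace (m-1)%nat with 0%nat by lia; reflexivity).
  rewrite E. unfold Rdiv. rewrite Rinv_0, Rmult_0_r, Rpower_O. lra.
  apply Rdiv_lt_0_compat; [apply u_pos; lra| apply u_pos; lra].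
Qed.

Lemma bellman_cand re rho c v s n w0 sigma i h :
  0 < c -> c < v - s -> rho <= 0 -> (2 <= n)%nat -> WF n h ->
  (forall j, j <> i -> sigma j h = pstar rho c v s (nbids (active re n h))) ->
  sumR (fun a => prof_prob 0 (active re n h) (fun j => sigma j h) a *
       (if (nbids a =? 1)%nat then u rho (wealth c w0 i h + (if nth i a false then v - s - c else 0))
        else u rho (wealth c w0 i (h ++ [a])))) (profiles n) = u rho (wealth c w0 i h).
Proof.
  intros Hc Hcv Hr Hn Hw Hs.
  set (act := active re n h). set (w := wealth c w0 i h). set (q := fun j => sigma j h).
  set (p := pstar rho c v s (nbids act)).
  assert (Hl : length act = n) by (apply length_active; auto).
  replace (profiles n) with (profiles (length act)) by (rewrite Hl; auto).
  change (Ex 0 act q (fun a => (if (nbids a =? 1)%nat then u rho (w + (if nth i a false then v - s - c else 0))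
        else u rho (wealth c w0 i (h ++ [a])))) = u rho w).
  rewrite (Ex_ext _ _ _ _ (fun a => if (nbids a =? 1)%nat then u rho (w + (if nth i a false then v - s - c else 0))
        else u rho (w - (if nth i a false then c else 0)))) by (intros; rewrite wealth_app; reflexivity).
  destruct (nth i act false) eqn:Ei.
  - rewrite (Ex_split _ _ _ _ i).
    rewrite (Ex_ext_nz _ _ (upd q i 0) _ (fun _ => u rho w)).
    2:{ intros a Ha Hp. rewrite (nz_upd0 act q a i) by (try apply profiles_length; auto).
        destruct (nbids a =? 1)%nat; f_equal; ring. }
    rewrite (Ex_ext_nz _ _ (upd q i 1) _ (fun a => u rho (w + (v-s-c)) * ind1 a + u rho (w - c) * (1 - ind1 a))).
    2:{ intros a Ha Hp. rewrite (nz_upd1 act q a i) by (try apply profiles_length; auto).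
        unfold ind1. destruct (nbids a =? 1)%nat; ring. }
    rewrite (Ex_ext _ _ _ (fun a => u rho (w + (v-s-c)) * ind1 a + u rho (w - c) * (1 - ind1 a))
       (fun a => (u rho (w + (v-s-c)) - u rho (w-c)) * ind1 a + u rho (w-c) * 1)) by (intros; ring).
    rewrite Ex_lin, !Ex_const.
    rewrite (CFr1 act 0 (upd q i 1) i 1 p) by (apply fixat_upd; auto).
    assert (Hm : (2 <= nbids act)%nat) by (apply nactive_ge2; auto).
    unfold p. rewrite pstar_pow by auto.
    replace (w + (v - s - c)) with ((w - c) + (v - s)) by ring.
    rewrite (u_add rho (w - c) (v - s)).
    assert (Ew : u rho w = u rho (w - c) + EE rho (w - c) * u rho c) by (rewrite <- u_add; f_equal; ring).
    rewrite Ew.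
    unfold xr. field. apply Rgt_not_eq, u_pos; lra.
  - rewrite (Ex_ext_nz _ _ q _ (fun _ => u rho w)). apply Ex_const.
    intros a Ha Hp. rewrite (nz_inact act q a i) by (try apply profiles_length; auto).
    destruct (nbids a =? 1)%nat; f_equal; ring.
Qed.

Lemma conv_const T L x : (forall K, T K = L) -> conv_to T x -> x = Fin L.
Proof.
  intros HT. destruct x as [L'|]; simpl; intros H.
  - f_equal. apply (UL_sequence T); auto. intros e He. exists 0%nat. intros. rewrite HT. unfold R_dist. rewrite Rminus_diag, Rabs_R0; auto.
  - destruct (H L) as [N HN]. specialize (HN N (le_n _)). rewrite HT in HN; lra.
Qed.

Lemma cand_value re rho c v s n w0 sigma i (tstar : hist -> R) :
  0 < c -> c < v - s -> rho <= 0 -> (2 <= n)%nat ->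
  (forall h, tstar h = pstar rho c v s (nbids (active re n h))) ->
  (forall j h, j <> i -> sigma j h = tstar h) ->
  forall K h, valid_hist re n h -> tval re rho c v s n w0 sigma i K h = u rho (wealth c w0 i h).
Proof.
  intros H H0 H1 H2 H3 H4 K h Hv. apply (tval_const re rho c v s n w0 sigma i (valid_hist re n)); [| |exact Hv].
  - intros. eapply valid_step; eauto.
  - intros. apply bellman_cand; auto. apply valid_WF with re; auto.
    intros. rewrite H4; auto.
Qed.

Lemma cand_SSPE re rho c v s n w0 (tstar : hist -> R) :
  0 < c -> c < v - s -> rho <= 0 -> (2 <= n)%nat ->
  (forall h, tstar h = pstar rho c v s (nbids (active re n h))) ->
  SSPE re rho c v s n w0 tstar.
Proof.
  intros. split.
  - intros h. rewrite H3. apply pstar_strat; auto.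
  - intros h Hv i Hi d Hd x y Hx Hy.
    rewrite (conv_const _ _ x (fun K => cand_value re rho c v s n w0 (deviate (fun _ => tstar) i d) i tstar H H0 H1 H2 H3
          ltac:(intros j0 h0 Hj0; unfold deviate; cbv beta; apply Nat.eqb_neq in Hj0; rewrite Hj0; auto) K h Hv) Hx).
    rewrite (conv_const _ _ y (fun K => cand_value re rho c v s n w0 (fun _ => tstar) i tstar H H0 H1 H2 H3
          ltac:(intros; auto) K h Hv) Hy).
    simpl; lra.
Qed.

Lemma dec_le (Z : nat -> R) : (forall K, Z (S K) <= Z K) -> forall N k, (N <= k)%nat -> Z k <= Z N.
Proof. intros H N k Hk. induction Hk; [lra|]. specialize (H m); lra. Qed.

Lemma cv_const k : Un_cv (fun _ => k) k.
Proof. intros e He. exists 0%nat. intros. unfold R_dist. rewrite Rminus_diag, Rabs_R0; auto. Qed.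

Lemma seq_conv (T Sv : nat -> R) (B : R) : 0 <= B ->
  (forall K, 0 <= Sv K) -> (forall K, Sv (S K) <= Sv K) ->
  (forall K, T (S K) - T K <= B * (Sv K - Sv (S K))) ->
  exists x, conv_to T x.
Proof.
  intros HB HS0 HS HT.
  set (Z := fun K => T K + B * Sv K).
  assert (HZ : forall K, Z (S K) <= Z K) by (intros K; unfold Z; specialize (HT K); lra).
  destruct (decreasing_cv Sv HS) as [Ls HLs].
  { exists 0. intros x [i ->]. unfold opp_seq. specialize (HS0 i); lra. }
  destruct (classic (exists m, forall K, m <= Z K)) as [[m Hm]|Hn].
  - destruct (decreasing_cv Z HZ) as [Lz HLz].
    { exists (-m). intros x [i ->]. unfold opp_seq. specialize (Hm i); lra. }
    exists (Fin (Lz - B * Ls)). simpl.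
    apply (Un_cv_ext (fun K => Z K - B * Sv K)). intros; unfold Z; ring.
    apply CV_minus; auto. apply CV_mult; auto. apply cv_const.
  - exists NegInf. simpl. intros M.
    destruct (classic (exists N, Z N < M)) as [[N HN]|HN].
    + exists N. intros k Hk. pose proof (dec_le Z HZ N k Hk).
      assert (T k <= Z k) by (unfold Z; specialize (HS0 k); nra). lra.
    + exfalso; apply Hn. exists M. intros K. apply Rnot_lt_le. intro; apply HN; eauto.
Qed.

Definition probs_all (sigma : strat_profile) := forall j h, 0 <= sigma j h <= 1.

Lemma sum_Ex re n sigma h F : WF n h ->
  sumR (fun a => prof_prob 0 (active re n h) (fun j => sigma j h) a * F a) (profiles n) =
  Ex 0 (active re n h) (fun j => sigma j h) F.
Proof. intros H. unfold Ex. rewrite length_active; auto. Qed.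

Lemma In_prof_act re n h a : WF n h -> In a (profiles (length (active re n h))) -> In a (profiles n) /\ length a = n.
Proof. intros H Ha. rewrite length_active in Ha by auto. split; auto. apply profiles_length; auto. Qed.

Fixpoint surv re n (sigma : strat_profile) K h : R :=
  match K with
  | O => 1
  | S K' => sumR (fun a => prof_prob 0 (active re n h) (fun j => sigma j h) a *
              (if (nbids a =? 1)%nat then 0 else surv re n sigma K' (h ++ [a]))) (profiles n)
  end.

Lemma surv_bounds re n sigma K h : probs_all sigma -> WF n h -> 0 <= surv re n sigma K h <= 1.
Proof.
  intros Hs. revert h; induction K; intros h Hh; simpl; [lra|].
  rewrite sum_Ex by auto. split.
  - rewrite <- (Ex_const 0 (active re n h) (fun j => sigma j h) 0) at 1.
    apply Ex_le. intro; apply Hs. intros a Ha _. destruct (In_prof_act re n h a Hh Ha).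
    destruct (nbids a =? 1)%nat; [lra|]. apply IHK. apply WF_app; auto.
  - rewrite <- (Ex_const 0 (active re n h) (fun j => sigma j h) 1).
    apply Ex_le. intro; apply Hs. intros a Ha _. destruct (In_prof_act re n h a Hh Ha).
    destruct (nbids a =? 1)%nat; [lra|]. apply IHK. apply WF_app; auto.
Qed.

Lemma surv_dec re n sigma K h : probs_all sigma -> WF n h -> surv re n sigma (S K) h <= surv re n sigma K h.
Proof.
  intros Hs. revert h; induction K; intros h Hh.
  - pose proof (surv_bounds re n sigma 1 h Hs Hh). simpl surv at 2. lra.
  - change (surv re n sigma (S (S K)) h) with (sumR (fun a => prof_prob 0 (active re n h) (fun j => sigma j h) a *
              (if (nbids a =? 1)%nat then 0 else surv re n sigma (S K) (h ++ [a]))) (profiles n)).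
    change (surv re n sigma (S K) h) with (sumR (fun a => prof_prob 0 (active re n h) (fun j => sigma j h) a *
              (if (nbids a =? 1)%nat then 0 else surv re n sigma K (h ++ [a]))) (profiles n)).
    rewrite !sum_Ex by auto. apply Ex_le. intro; apply Hs. intros a Ha _. destruct (In_prof_act re n h a Hh Ha).
    destruct (nbids a =? 1)%nat; [lra|]. apply IHK. apply WF_app; auto.
Qed.

Lemma wealth_app_le c w0 i h a : 0 < c -> wealth c w0 i (h ++ [a]) <= wealth c w0 i h.
Proof. intros. rewrite wealth_app. destruct (nth i a false); lra. Qed.

Lemma tval_diff re rho c v s n w0 sigma i K h : probs_all sigma -> WF n h -> rho <= 0 -> 0 < c -> c < v - s ->
  tval re rho c v s n w0 sigma i (S K) h - tval re rho c v s n w0 sigma i K h <=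
  EE rho (wealth c w0 i h) * u rho (v - s) * (surv re n sigma K h - surv re n sigma (S K) h).
Proof.
  intros Hs Hw Hr Hc Hcv. assert (Hu : 0 < u rho (v-s)) by (apply u_pos; lra).
  revert h Hw; induction K; intros h Hw.
  - rewrite tval_S. simpl tval. simpl surv. rewrite !sum_Ex by auto.
    set (q := fun j => sigma j h). set (act := active re n h). set (w := wealth c w0 i h).
    set (B := EE rho w * u rho (v - s)).
    assert (Ex 0 act q (fun a => if (nbids a =? 1)%nat then u rho (w + (if nth i a false then v - s - c else 0))
       else u rho (wealth c w0 i (h ++ [a]))) <=
       Ex 0 act q (fun a => 1 * (u rho w + B) + (-B) * (if (nbids a =? 1)%nat then 0 else 1))).
    { apply Ex_le. intro; apply Hs. intros a Ha _.
      destruct (nbids a =? 1)%nat.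
      - unfold B. rewrite Rmult_0_r, Rplus_0_r, Rmult_1_l, <- u_add.
        apply u_le; auto. destruct (nth i a false); lra.
      - replace (1 * (u rho w + B) + - B * 1) with (u rho w) by ring. apply u_le; auto. apply wealth_app_le; auto. }
    rewrite Ex_lin, Ex_const in H. lra.
  - rewrite (tval_S _ _ _ _ _ _ _ _ _ (S K)), tval_S.
    change (surv re n sigma (S (S K)) h) with (sumR (fun a => prof_prob 0 (active re n h) (fun j => sigma j h) a *
              (if (nbids a =? 1)%nat then 0 else surv re n sigma (S K) (h ++ [a]))) (profiles n)).
    change (surv re n sigma (S K) h) with (sumR (fun a => prof_prob 0 (active re n h) (fun j => sigma j h) a *
              (if (nbids a =? 1)%nat then 0 else surv re n sigma K (h ++ [a]))) (profiles n)).
    rewrite !sum_Ex by auto.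
    set (q := fun j => sigma j h). set (act := active re n h).
    match goal with |- Ex 0 act q ?F1 - Ex 0 act q ?F2 <= ?B * (Ex 0 act q ?G1 - Ex 0 act q ?G2) =>
      assert (Ex 0 act q (fun a => 1 * F1 a + (-1) * F2 a) <= Ex 0 act q (fun a => B * G1 a + (-B) * G2 a)) end.
    { apply Ex_le. intro; apply Hs. intros a Ha _. destruct (In_prof_act re n h a Hw Ha) as [Ha1 Ha2].
      destruct (nbids a =? 1)%nat; [lra|].
      assert (Hw' : WF n (h ++ [a])) by (apply WF_app; auto).
      pose proof (IHK (h ++ [a]) Hw').
      pose proof (surv_dec re n sigma K (h ++ [a]) Hs Hw').
      assert (EE rho (wealth c w0 i (h ++ [a])) <= EE rho (wealth c w0 i h)) by (apply EE_mono; auto; apply wealth_app_le; auto).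
      pose proof (EE_pos rho (wealth c w0 i (h ++ [a]))).
      assert (EE rho (wealth c w0 i (h ++ [a])) * u rho (v - s) * (surv re n sigma K (h ++ [a]) - surv re n sigma (S K) (h ++ [a]))
        <= EE rho (wealth c w0 i h) * u rho (v - s) * (surv re n sigma K (h ++ [a]) - surv re n sigma (S K) (h ++ [a]))).
      { apply Rmult_le_compat_r; [lra|]. apply Rmult_le_compat_r; lra. }
      lra. }
    rewrite !Ex_lin in H. lra.
Qed.

Lemma tval_converges re rho c v s n w0 sigma i h : probs_all sigma -> WF n h -> rho <= 0 -> 0 < c -> c < v - s ->
  exists x, has_value re rho c v s n w0 sigma i h x.
Proof.
  intros. unfold has_value.
  apply (seq_conv _ (fun K => surv re n sigma K h) (EE rho (wealth c w0 i h) * u rho (v - s))).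
  - apply Rmult_le_pos; [left; apply EE_pos| left; apply u_pos; lra].
  - intros; apply surv_bounds; auto.
  - intros; apply surv_dec; auto.
  - intros; apply tval_diff; auto.
Qed.

Lemma nobid_const re rho c v s n w0 sigma i (Inv : hist -> Prop) :
  (forall h a, Inv h -> In a (profiles n) -> nbids a <> 1%nat ->
     prof_prob 0 (active re n h) (fun j => sigma j h) a <> 0 -> Inv (h ++ [a])) ->
  (forall h, Inv h -> WF n h /\ forall a, In a (profiles n) ->
     prof_prob 0 (active re n h) (fun j => sigma j h) a <> 0 -> nth i a false = false) ->
  forall K h, Inv h -> tval re rho c v s n w0 sigma i K h = u rho (wealth c w0 i h).
Proof.
  intros Hcl Hz. apply tval_const; auto.
  intros h Hh. destruct (Hz h Hh) as [Hw Hz']. rewrite sum_Ex by auto.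
  rewrite <- (Ex_const 0 (active re n h) (fun j => sigma j h) (u rho (wealth c w0 i h))).
  apply Ex_ext_nz. intros a Ha Hp. destruct (In_prof_act re n h a Hw Ha).
  rewrite wealth_app, (Hz' a); auto. destruct (nbids a =? 1)%nat; f_equal; ring.
Qed.

Lemma dev0_value re rho c v s n w0 sigma i K h : WF n h ->
  tval re rho c v s n w0 (deviate sigma i (fun _ => 0)) i K h = u rho (wealth c w0 i h).
Proof.
  intros Hw. apply (nobid_const re rho c v s n w0 _ i (WF n)); auto.
  - intros. apply WF_app; auto. apply profiles_length; auto.
  - intros h' Hh'. split; auto. intros a Ha Hp.
    destruct (nth i a false) eqn:E; auto. exfalso.
    assert (Hl : length a = length (active re n h')) by (rewrite length_active by auto; apply profiles_length; auto).
    apply (proj2 (prob_nz_bid _ 0 _ a i Hl Hp E)). simpl. unfold deviate. rewrite Nat.eqb_refl. auto.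
Qed.

Lemma inactive_value re rho c v s n w0 sigma i K h : WF n h -> nth i (active re n h) false = false ->
  tval re rho c v s n w0 sigma i K h = u rho (wealth c w0 i h).
Proof.
  intros Hw Hi. apply (nobid_const re rho c v s n w0 _ i (fun h => WF n h /\ nth i (active re n h) false = false)); auto.
  - intros h' a [Hw' Hi'] Ha Hn Hp. assert (Hl : length a = length (active re n h')) by (rewrite length_active by auto; apply profiles_length; auto).
    split. apply WF_app; auto. apply profiles_length; auto.
    rewrite active_app. unfold next_active. destruct re; auto. destruct (2 <=? nbids a)%nat; auto.
    apply (nz_inact _ _ a i Hl Hi' Hp).
  - intros h' [Hw' Hi']. split; auto. intros a Ha Hp.
    assert (Hl : length a = length (active re n h')) by (rewrite length_active by auto; apply profiles_length; auto).
    apply (nz_inact _ _ a i Hl Hi' Hp).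
Qed.

Lemma tval_ub re rho c v s n w0 sigma i K h : probs_all sigma -> WF n h -> rho <= 0 -> 0 < c -> c < v - s ->
  tval re rho c v s n w0 sigma i K h <= u rho (wealth c w0 i h + (v - s)).
Proof.
  intros Hs Hw Hr Hc Hcv. revert h Hw; induction K; intros h Hw.
  - simpl. apply u_le; auto; lra.
  - rewrite tval_S, sum_Ex by auto.
    rewrite <- (Ex_const 0 (active re n h) (fun j => sigma j h) (u rho (wealth c w0 i h + (v - s)))).
    apply Ex_le. intro; apply Hs. intros a Ha _. destruct (In_prof_act re n h a Hw Ha).
    destruct (nbids a =? 1)%nat.
    + apply u_le; auto. destruct (nth i a false); lra.
    + eapply Rle_trans; [apply IHK; apply WF_app; auto|]. apply u_le; auto.
      pose proof (wealth_app_le c w0 i h a Hc); lra.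
Qed.

Lemma tval_lb re rho c v s n w0 sigma i K h : probs_all sigma -> WF n h -> rho < 0 ->
  1 / rho <= tval re rho c v s n w0 sigma i K h.
Proof.
  intros Hs Hw Hr. revert h Hw; induction K; intros h Hw.
  - simpl. left; apply u_lb; auto.
  - rewrite tval_S, sum_Ex by auto.
    rewrite <- (Ex_const 0 (active re n h) (fun j => sigma j h) (1 / rho)) at 1.
    apply Ex_le. intro; apply Hs. intros a Ha _. destruct (In_prof_act re n h a Hw Ha).
    destruct (nbids a =? 1)%nat.
    + left; apply u_lb; auto.
    + apply IHK. apply WF_app; auto.
Qed.

Definition gn rho T w := (T - u rho w) / EE rho w.

Lemma gn_u rho w x : gn rho (u rho (w + x)) w = u rho x.
Proof. unfold gn. rewrite u_add. field. apply Rgt_not_eq, EE_pos. Qed.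

Lemma gn_mono rho T w w' : rho <= 0 -> w' <= w -> (rho < 0 -> 1 / rho <= T) -> gn rho T w <= gn rho T w'.
Proof.
  intros Hr Hw HT. unfold gn.
  destruct (Req_dec rho 0) as [E|E].
  - subst. unfold u, EE. destruct (Req_EM_T 0 0); [|lra]. replace (-0*w) with 0 by ring; replace (-0*w') with 0 by ring.
    rewrite exp_0. lra.
  - assert (Hr' : rho < 0) by lra. specialize (HT Hr').
    assert (K : forall x, (T - u rho x) / EE rho x = (T - 1/rho) / EE rho x + 1 / rho).
    { intros x. unfold u, EE. destruct (Req_EM_T rho 0); [lra|]. field. split; [lra| apply Rgt_not_eq, exp_pos]. }
    rewrite !K. pose proof (EE_mono rho w' w Hr Hw). pose proof (EE_pos rho w').
    assert ((T - 1 / rho) / EE rho w <= (T - 1 / rho) / EE rho w'); [|lra].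
    unfold Rdiv. apply Rmult_le_compat_l; [lra|]. apply Rinv_le_contravar; auto.
Qed.

Lemma Ex_sum_swap j act q (F : nat -> profile -> R) l :
  sumR (fun k => Ex j act q (F k)) l = Ex j act q (fun a => sumR (fun k => F k a) l).
Proof.
  unfold Ex. rewrite sumR_swap. apply sumR_ext. intros a _.
  induction l; simpl; [ring|rewrite IHl; ring].
Qed.

Lemma sum_nth_bids a (U : R) : sumR (fun j => if nth j a false then U else 0) (seq 0 (length a)) = INR (nbids a) * U.
Proof.
  induction a as [|b a IH]; simpl; [ring|].
  rewrite <- seq_shift, sumR_map. simpl. rewrite IH.
  destruct b; [rewrite nbids_t, S_INR| rewrite nbids_f]; ring.
Qed.

Lemma surplus re rho c v s n w0 sigma K h : probs_all sigma -> WF n h -> rho <= 0 -> 0 < c -> c < v - s ->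
  sumR (fun j => gn rho (tval re rho c v s n w0 sigma j K h) (wealth c w0 j h)) (seq 0 n) <= u rho (v - s - c).
Proof.
  intros Hs Hw Hr Hc Hcv. assert (HU : 0 < u rho (v - s - c)) by (apply u_pos; lra).
  revert h Hw; induction K; intros h Hw.
  - simpl. rewrite (sumR_ext _ (fun _ => 0)). rewrite sumR_const0; lra.
    intros; unfold gn; unfold Rdiv; rewrite Rminus_diag; ring.
  - set (q := fun j => sigma j h). set (act := active re n h).
    rewrite (sumR_ext _ (fun j => Ex 0 act q (fun a => (/ EE rho (wealth c w0 j h)) * (if (nbids a =? 1)%nat then u rho (wealth c w0 j h + (if nth j a false then v - s - c else 0))
      else tval re rho c v s n w0 sigma j K (h ++ [a])) + (- u rho (wealth c w0 j h) / EE rho (wealth c w0 j h)) * 1))).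
    2:{ intros j _. rewrite Ex_lin, Ex_const. rewrite tval_S, sum_Ex by auto. unfold gn. fold q act. field. apply Rgt_not_eq, EE_pos. }
    rewrite Ex_sum_swap.
    rewrite <- (Ex_const 0 act q (u rho (v - s - c))).
    apply Ex_le. intro; apply Hs. intros a Ha Hp. destruct (In_prof_act re n h a Hw Ha) as [Ha1 Ha2].
    destruct (nbids a =? 1)%nat eqn:E1.
    + rewrite (sumR_ext _ (fun j => if nth j a false then u rho (v - s - c) else 0)).
      * rewrite <- Ha2, sum_nth_bids. apply Nat.eqb_eq in E1. rewrite E1. simpl; lra.
      * intros j _. replace (/ EE rho (wealth c w0 j h) * u rho (wealth c w0 j h + (if nth j a false then v - s - c else 0)) +
           - u rho (wealth c w0 j h) / EE rho (wealth c w0 j h) * 1) with (gn rho (u rho (wealth c w0 j h + (if nth j a false then v - s - c else 0))) (wealth c w0 j h)) by (unfold gn; field; apply Rgt_not_eq, EE_pos).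
        rewrite gn_u. destruct (nth j a false); auto. apply u_0.
    + assert (Hw' : WF n (h ++ [a])) by (apply WF_app; auto).
      eapply Rle_trans; [|apply (IHK (h ++ [a]) Hw')].
      apply sumR_le. intros j _.
      replace (/ EE rho (wealth c w0 j h) * tval re rho c v s n w0 sigma j K (h ++ [a]) +
           - u rho (wealth c w0 j h) / EE rho (wealth c w0 j h) * 1) with
         (gn rho (tval re rho c v s n w0 sigma j K (h ++ [a])) (wealth c w0 j h)) by (unfold gn; field; apply Rgt_not_eq, EE_pos).
      apply gn_mono; auto. apply wealth_app_le; auto.
      intros; apply tval_lb; auto.
Qed.

Lemma cv_sumR {X} (F : nat -> X -> R) (L : X -> R) l :
  (forall x, In x l -> Un_cv (fun K => F K x) (L x)) -> Un_cv (fun K => sumR (F K) l) (sumR L l).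
Proof.
  induction l as [|x l IH]; intros H; simpl.
  - apply cv_const.
  - apply CV_plus; [apply H; left; auto| apply IH; intros; apply H; right; auto].
Qed.

Lemma Ex_cv j act q (F : nat -> profile -> R) L :
  (forall a, In a (profiles (length act)) -> prof_prob j act q a <> 0 -> Un_cv (fun K => F K a) (L a)) ->
  Un_cv (fun K => Ex j act q (F K)) (Ex j act q L).
Proof.
  intros H. unfold Ex. apply cv_sumR. intros a Ha.
  destruct (Req_dec (prof_prob j act q a) 0) as [E|E].
  - rewrite E. apply (Un_cv_ext (fun _ => 0)); [intros; ring|]. rewrite Rmult_0_l. apply cv_const.
  - apply CV_mult; [apply cv_const| auto].
Qed.

Lemma cv_shift1 T L : Un_cv (fun K => T (S K)) L -> Un_cv T L.
Proof. intros H. apply (CV_shift T 1). apply (Un_cv_ext (fun K => T (S K))); auto. intros; f_equal; lia. Qed.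

Lemma cv_le_const T L b : Un_cv T L -> (forall K, T K <= b) -> L <= b.
Proof. intros H Hb. eapply Rle_cv_lim; [exact Hb| exact H| apply cv_const]. Qed.
Lemma cv_ge_const T L b : Un_cv T L -> (forall K, b <= T K) -> b <= L.
Proof. intros H Hb. eapply Rle_cv_lim; [exact Hb| apply cv_const| exact H]. Qed.

Lemma conv_fin_unique T a x : Un_cv T a -> conv_to T x -> x = Fin a.
Proof.
  intros H. destruct x as [b|]; simpl; intros H'.
  - f_equal. apply (UL_sequence T); auto.
  - destruct (H 1 Rlt_0_1) as [N HN]. destruct (H' (a - 1)) as [N' HN'].
    specialize (HN (max N N') ltac:(lia)). specialize (HN' (max N N') ltac:(lia)).
    unfold R_dist in HN. apply Rabs_def2 in HN. lra.
Qed.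

Lemma tval_agree re rho c v s n w0 sigma sigma' i K h :
  (forall j h', (length h <= length h')%nat -> sigma j h' = sigma' j h') ->
  tval re rho c v s n w0 sigma i K h = tval re rho c v s n w0 sigma' i K h.
Proof.
  revert h; induction K; intros h H; [reflexivity|].
  rewrite !tval_S. apply sumR_ext. intros a _.
  rewrite (prob_ext_ge _ 0 (fun j => sigma j h) (fun j => sigma' j h)) by (intros; apply H; lia).
  f_equal. destruct (nbids a =? 1)%nat; auto. apply IHK.
  intros j h' Hl. apply H. rewrite length_app in Hl; simpl in Hl; lia.
Qed.

Definition Vf re rho c v s n w0 (tau : hist -> R) (h : hist) (i : nat) : R :=
  epsilon (inhabits 0) (fun y => has_value re rho c v s n w0 (fun _ => tau) i h (Fin y)).

Lemma probs_all_tau (tau : hist -> R) : is_strategy tau -> probs_all (fun _ => tau).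
Proof. intros H j h; apply H. Qed.

Lemma Vf_spec re rho c v s n w0 tau h i : 0 < c -> c < v - s -> rho <= 0 ->
  SSPE re rho c v s n w0 tau -> valid_hist re n h -> (i < n)%nat ->
  has_value re rho c v s n w0 (fun _ => tau) i h (Fin (Vf re rho c v s n w0 tau h i)) /\
  u rho (wealth c w0 i h) <= Vf re rho c v s n w0 tau h i.
Proof.
  intros Hc Hcv Hr [Hst Heq] Hv Hi.
  assert (Hw : WF n h) by (eapply valid_WF; eauto).
  destruct (tval_converges re rho c v s n w0 (fun _ => tau) i h (probs_all_tau tau Hst) Hw Hr Hc Hcv) as [x Hx].
  assert (H0 : has_value re rho c v s n w0 (deviate (fun _ => tau) i (fun _ => 0)) i h (Fin (u rho (wealth c w0 i h)))).
  { unfold has_value. simpl. apply (Un_cv_ext (fun _ => u rho (wealth c w0 i h))).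
    intros; symmetry; apply dev0_value; auto. apply cv_const. }
  pose proof (Heq h Hv i Hi (fun _ => 0) ltac:(intro; lra) _ x H0 Hx) as Hle.
  destruct x as [y|]; [|simpl in Hle; contradiction].
  assert (Hs : has_value re rho c v s n w0 (fun _ => tau) i h (Fin (Vf re rho c v s n w0 tau h i))).
  { unfold Vf. apply epsilon_spec. exists y; auto. }
  split; auto.
  assert (Vf re rho c v s n w0 tau h i = y) by (apply (UL_sequence (fun K => tval re rho c v s n w0 (fun _ => tau) i K h)); auto).
  simpl in Hle. lra.
Qed.

Definition Gf re rho c v s n w0 tau h i := gn rho (Vf re rho c v s n w0 tau h i) (wealth c w0 i h).

Lemma gn_le rho T T' w : T <= T' -> gn rho T w <= gn rho T' w.
Proof. intros. unfold gn, Rdiv. apply Rmult_le_compat_r; [left; apply Rinv_0_lt_compat, EE_pos| lra]. Qed.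

Lemma gn_self rho w : gn rho (u rho w) w = 0.
Proof. unfold gn. unfold Rdiv; rewrite Rminus_diag; ring. Qed.

Lemma Gf_bounds re rho c v s n w0 tau h i : 0 < c -> c < v - s -> rho <= 0 ->
  SSPE re rho c v s n w0 tau -> valid_hist re n h -> (i < n)%nat ->
  0 <= Gf re rho c v s n w0 tau h i <= u rho (v - s).
Proof.
  intros Hc Hcv Hr HS Hv Hi. destruct (Vf_spec re rho c v s n w0 tau h i Hc Hcv Hr HS Hv Hi) as [H1 H2].
  unfold Gf. split.
  - rewrite <- (gn_self rho (wealth c w0 i h)). apply gn_le; auto.
  - rewrite <- (gn_u rho (wealth c w0 i h) (v - s)). apply gn_le.
    apply (cv_le_const _ _ _ H1). intros; apply tval_ub; auto. apply probs_all_tau; destruct HS; auto.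
    eapply valid_WF; eauto.
Qed.

Lemma Gf_inactive re rho c v s n w0 tau h i : 0 < c -> c < v - s -> rho <= 0 ->
  SSPE re rho c v s n w0 tau -> valid_hist re n h -> (i < n)%nat -> nth i (active re n h) false = false ->
  Vf re rho c v s n w0 tau h i = u rho (wealth c w0 i h).
Proof.
  intros Hc Hcv Hr HS Hv Hi Ha. destruct (Vf_spec re rho c v s n w0 tau h i Hc Hcv Hr HS Hv Hi) as [H1 H2].
  apply (UL_sequence _ _ _ H1). apply (Un_cv_ext (fun _ => u rho (wealth c w0 i h))).
  intros; symmetry; apply inactive_value; auto. eapply valid_WF; eauto. apply cv_const.
Qed.

Lemma Gf_surplus re rho c v s n w0 tau h : 0 < c -> c < v - s -> rho <= 0 ->
  SSPE re rho c v s n w0 tau -> valid_hist re n h ->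
  sumR (fun j => Gf re rho c v s n w0 tau h j) (seq 0 n) <= u rho (v - s - c).
Proof.
  intros Hc Hcv Hr HS Hv.
  apply (cv_le_const (fun K => sumR (fun j => gn rho (tval re rho c v s n w0 (fun _ => tau) j K h) (wealth c w0 j h)) (seq 0 n))).
  - apply cv_sumR. intros j Hj. apply in_seq in Hj.
    destruct (Vf_spec re rho c v s n w0 tau h j Hc Hcv Hr HS Hv ltac:(lia)) as [H1 _].
    unfold Gf, gn. apply CV_mult; [apply CV_minus; [exact H1| apply cv_const]| apply cv_const].
  - intros K. apply surplus; auto. apply probs_all_tau; destruct HS; auto. eapply valid_WF; eauto.
Qed.

Definition FB re rho c v s n w0 tau h i (a : profile) : R :=
  if (nbids a =? 1)%nat then u rho (wealth c w0 i h + (if nth i a false then v - s - c else 0))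
  else Vf re rho c v s n w0 tau (h ++ [a]) i.

Lemma lim_cont re rho c v s n w0 tau h i q' : 0 < c -> c < v - s -> rho <= 0 ->
  SSPE re rho c v s n w0 tau -> valid_hist re n h -> (i < n)%nat ->
  Un_cv (fun K => Ex 0 (active re n h) q' (fun a => if (nbids a =? 1)%nat
      then u rho (wealth c w0 i h + (if nth i a false then v - s - c else 0))
      else tval re rho c v s n w0 (fun _ => tau) i K (h ++ [a])))
    (Ex 0 (active re n h) q' (FB re rho c v s n w0 tau h i)).
Proof.
  intros Hc Hcv Hr HS Hv Hi. apply Ex_cv. intros a Ha Hp. unfold FB.
  destruct (In_prof_act re n h a (valid_WF _ _ _ Hv) Ha) as [Ha1 Ha2].
  destruct (nbids a =? 1)%nat eqn:E; [apply cv_const|].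
  apply Nat.eqb_neq in E.
  apply (Vf_spec re rho c v s n w0 tau (h ++ [a]) i Hc Hcv Hr HS); auto.
  eapply valid_step; eauto.
Qed.

Definition devx (tau : hist -> R) (h : hist) (x : R) : hist -> R :=
  fun h' => if list_eq_dec (list_eq_dec Bool.bool_dec) h' h then x else tau h'.

Lemma dev_bound re rho c v s n w0 tau h i x : 0 < c -> c < v - s -> rho <= 0 ->
  SSPE re rho c v s n w0 tau -> valid_hist re n h -> (i < n)%nat -> 0 <= x <= 1 ->
  Ex 0 (active re n h) (upd (fun _ => tau h) i x) (FB re rho c v s n w0 tau h i) <= Vf re rho c v s n w0 tau h i.
Proof.
  intros Hc Hcv Hr HS Hv Hi Hx.
  pose proof HS as [Hst Heq].
  assert (Hw : WF n h) by (eapply valid_WF; eauto).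
  set (sB := deviate (fun _ => tau) i (devx tau h x)).
  assert (HB : has_value re rho c v s n w0 sB i h (Fin (Ex 0 (active re n h) (upd (fun _ => tau h) i x) (FB re rho c v s n w0 tau h i)))).
  { unfold has_value; simpl. apply cv_shift1.
    eapply Un_cv_ext; [|apply (lim_cont re rho c v s n w0 tau h i (upd (fun _ => tau h) i x)); auto].
    intros K. cbv beta. rewrite tval_S, sum_Ex by auto. unfold Ex. apply sumR_ext. intros a _.
    rewrite (prob_ext_ge _ 0 (fun j => sB j h) (upd (fun _ => tau h) i x)).
    2:{ intros k _. unfold sB, deviate, upd, devx. destruct (k =? i)%nat; auto.
        destruct (list_eq_dec (list_eq_dec Bool.bool_dec) h h); congruence. }
    f_equal. destruct (nbids a =? 1)%nat; auto.
    apply tval_agree. intros j h' Hl. unfold sB, deviate, devx. destruct (j =? i)%nat; auto.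
    destruct (list_eq_dec (list_eq_dec Bool.bool_dec) h' h); auto. subst. rewrite length_app in Hl; simpl in Hl; lia. }
  pose proof (Heq h Hv i Hi (devx tau h x) ltac:(intro h'; unfold devx; destruct (list_eq_dec (list_eq_dec Bool.bool_dec) h' h); auto) _ _ HB
     (proj1 (Vf_spec re rho c v s n w0 tau h i Hc Hcv Hr HS Hv Hi))).
  simpl in H; auto.
Qed.

Lemma Vf_mix re rho c v s n w0 tau h i : 0 < c -> c < v - s -> rho <= 0 ->
  SSPE re rho c v s n w0 tau -> valid_hist re n h -> (i < n)%nat ->
  Vf re rho c v s n w0 tau h i =
  tau h * Ex 0 (active re n h) (upd (fun _ => tau h) i 1) (FB re rho c v s n w0 tau h i) +
  (1 - tau h) * Ex 0 (active re n h) (upd (fun _ => tau h) i 0) (FB re rho c v s n w0 tau h i).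
Proof.
  intros Hc Hcv Hr HS Hv Hi.
  assert (Hw : WF n h) by (eapply valid_WF; eauto).
  apply (UL_sequence (fun K => tval re rho c v s n w0 (fun _ => tau) i K h)).
  - apply (Vf_spec re rho c v s n w0 tau h i Hc Hcv Hr HS Hv Hi).
  - apply cv_shift1. eapply Un_cv_ext.
    2:{ apply CV_plus; apply CV_mult; [apply cv_const| apply (lim_cont re rho c v s n w0 tau h i); auto
                                      |apply cv_const| apply (lim_cont re rho c v s n w0 tau h i); auto]. }
    intros K. cbv beta. rewrite tval_S, sum_Ex by auto. symmetry; exact (Ex_split 0 (active re n h) (fun _ => tau h) _ i).
Qed.

Lemma gn_Ex j act q F w rho : gn rho (Ex j act q F) w = Ex j act q (fun a => gn rho (F a) w).
Proof.
  unfold gn. rewrite (Ex_ext _ _ _ (fun a => (F a - u rho w) / EE rho w) (fun a => (/ EE rho w) * F a + (- u rho w / EE rho w) * 1)) by (intros; unfold Rdiv; ring).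
  rewrite Ex_lin, Ex_const. unfold Rdiv; ring.
Qed.

Lemma gn_shift rho T w c : gn rho T w = u rho (-c) + EE rho (-c) * gn rho T (w - c).
Proof.
  unfold gn. replace (w - c) with (w + -c) by ring. rewrite u_add, EE_add.
  field. split; apply Rgt_not_eq, EE_pos.
Qed.

Lemma EE_negc rho c : rho <= 0 -> 0 < c -> 0 < EE rho (-c) <= 1.
Proof. intros. split; [apply EE_pos|]. unfold EE. destruct (Req_dec rho 0).
  subst. replace (-0 * -c) with 0 by ring; rewrite exp_0; lra.
  left. rewrite <- exp_0. apply exp_increasing. nra. Qed.

Lemma local_facts re rho c v s n w0 tau h i M : 0 < c -> c < v - s -> rho <= 0 -> (2 <= n)%nat ->
  SSPE re rho c v s n w0 tau -> valid_hist re n h -> (i < n)%nat -> nth i (active re n h) false = true ->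
  (forall h' j, valid_hist re n h' -> (j < n)%nat -> Gf re rho c v s n w0 tau h' j <= M) ->
  let p := tau h in let k := (nbids (active re n h) - 1)%nat in
  let pi := (1 - p) ^ k in let r := INR k * p * (1 - p) ^ (pred k) in
  let G := Gf re rho c v s n w0 tau h i in
  let U := u rho (v - s - c) in let d := u rho (- c) in
  exists gB gN, G = p * gB + (1 - p) * gN /\ gB <= G /\ gN <= G /\
    pi * U + (1 - pi) * d <= gB /\ gB <= pi * U + (1 - pi) * (d + M) /\ gN <= (1 - r) * M.
Proof.
  intros Hc Hcv Hr Hn HS Hv Hi Ha HM p k pi r G U d.
  assert (Hw : WF n h) by (eapply valid_WF; eauto).
  set (act := active re n h). set (q := fun _ : nat => tau h). set (w := wealth c w0 i h).
  set (F := FB re rho c v s n w0 tau h i).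
  assert (Hq : probs_ok q) by (intro; apply (proj1 HS)).
  assert (Hp : 0 <= p <= 1) by apply (proj1 HS).
  exists (gn rho (Ex 0 act (upd q i 1) F) w), (gn rho (Ex 0 act (upd q i 0) F) w).
  pose proof (Vf_mix re rho c v s n w0 tau h i Hc Hcv Hr HS Hv Hi) as Hmix.
  pose proof (dev_bound re rho c v s n w0 tau h i 1 Hc Hcv Hr HS Hv Hi ltac:(lra)) as HB1.
  pose proof (dev_bound re rho c v s n w0 tau h i 0 Hc Hcv Hr HS Hv Hi ltac:(lra)) as HB0.
  fold act q F in Hmix, HB1, HB0.
  assert (HGdef : G = gn rho (Vf re rho c v s n w0 tau h i) w) by reflexivity.
  assert (HM0 : 0 <= M).
  { pose proof (Gf_bounds re rho c v s n w0 tau h i Hc Hcv Hr HS Hv Hi). specialize (HM h i Hv Hi). lra. }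
  pose proof (EE_negc rho c Hr Hc) as He.
  assert (Hcont : forall a, In a (profiles (length act)) -> (nbids a =? 1)%nat = false ->
     forall x, 0 <= x <= 1 -> prof_prob 0 act (upd q i x) a <> 0 ->
     0 <= Gf re rho c v s n w0 tau (h ++ [a]) i <= M).
  { intros a Ha' E x Hx Hp'. destruct (In_prof_act re n h a Hw Ha') as [Ha1 Ha2].
    apply Nat.eqb_neq in E. assert (Hv' : valid_hist re n (h ++ [a])) by (eapply valid_step; eauto).
    split; [apply Gf_bounds|apply HM]; auto. }
  assert (Hl : forall a, In a (profiles (length act)) -> length a = length act) by (intros; apply profiles_length; auto).
  assert (Hsh : forall a, nth i a false = true -> wealth c w0 i (h ++ [a]) = w - c) by (intros a E; rewrite wealth_app, E; auto).
  assert (Hsh0 : forall a, nth i a false = false -> wealth c w0 i (h ++ [a]) = w) by (intros a E; rewrite wealth_app, E; unfold w; ring).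
  assert (Hfix1 : fixat 0 act (upd q i 1) i 1 p) by (apply fixat_upd; auto).
  assert (Hfix0 : fixat 0 act (upd q i 0) i 0 p) by (apply fixat_upd; auto).
  pose proof (CFr1 act 0 (upd q i 1) i 1 p Hfix1) as Hpi.
  pose proof (CFr1 act 0 (upd q i 0) i 0 p Hfix0) as Hr0.
  replace (1 * (1 - p) ^ (nbids act - 1) + (1 - 1) * INR (nbids act - 1) * p * (1 - p) ^ Init.Nat.pred (nbids act - 1)) with pi in Hpi by (unfold pi, k, act; ring).
  replace (0 * (1 - p) ^ (nbids act - 1) + (1 - 0) * INR (nbids act - 1) * p * (1 - p) ^ Init.Nat.pred (nbids act - 1)) with r in Hr0 by (unfold r, k, act; ring).
  repeat split.
  - rewrite HGdef, Hmix. unfold gn. fold p. field. apply Rgt_not_eq, EE_pos.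
  - rewrite HGdef. apply gn_le; auto.
  - rewrite HGdef. apply gn_le; auto.
  - rewrite gn_Ex.
    replace (pi * U + (1 - pi) * d) with (Ex 0 act (upd q i 1) (fun a => (U - d) * ind1 a + d * 1)) by (rewrite Ex_lin, Ex_const, Hpi; ring).
    apply Ex_le. apply probs_ok_upd; auto; lra.
    intros a Ha' Hp'. pose proof (nz_upd1 act q a i (Hl a Ha') Ha Hp') as Ea.
    unfold F, FB, ind1. destruct (nbids a =? 1)%nat eqn:E.
    + rewrite Ea, gn_u. fold U. lra.
    + pose proof (Hcont a Ha' E 1 ltac:(lra) Hp').
      rewrite (gn_shift rho _ w c). fold d. rewrite <- (Hsh a Ea).
      change (gn rho (Vf re rho c v s n w0 tau (h ++ [a]) i) (wealth c w0 i (h ++ [a]))) with (Gf re rho c v s n w0 tau (h ++ [a]) i). pose proof (Rmult_le_pos _ _ (Rlt_le _ _ (proj1 He)) (proj1 H)). lra.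
  - rewrite gn_Ex.
    replace (pi * U + (1 - pi) * (d + M)) with
      (Ex 0 act (upd q i 1) (fun a => (U - d - M) * ind1 a + (d + M) * 1)) by (rewrite Ex_lin, Ex_const, Hpi; ring).
    apply Ex_le. apply probs_ok_upd; auto; lra.
    intros a Ha' Hp'. pose proof (nz_upd1 act q a i (Hl a Ha') Ha Hp') as Ea.
    unfold F, FB, ind1. destruct (nbids a =? 1)%nat eqn:E.
    + rewrite Ea, gn_u. fold U. lra.
    + pose proof (Hcont a Ha' E 1 ltac:(lra) Hp').
      rewrite (gn_shift rho _ w c). fold d. rewrite <- (Hsh a Ea).
      change (gn rho (Vf re rho c v s n w0 tau (h ++ [a]) i) (wealth c w0 i (h ++ [a]))) with (Gf re rho c v s n w0 tau (h ++ [a]) i).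
      assert (EE rho (-c) * Gf re rho c v s n w0 tau (h ++ [a]) i <= M); [|lra].
      destruct He. apply Rle_trans with (1 * Gf re rho c v s n w0 tau (h ++ [a]) i); [apply Rmult_le_compat_r|]; lra.
  - rewrite gn_Ex.
    replace ((1 - r) * M) with (Ex 0 act (upd q i 0) (fun a => (-M) * ind1 a + M * 1)) by (rewrite Ex_lin, Ex_const, Hr0; ring).
    apply Ex_le. apply probs_ok_upd; auto; lra.
    intros a Ha' Hp'. pose proof (nz_upd0 act q a i (Hl a Ha') Hp') as Ea.
    unfold F, FB, ind1. destruct (nbids a =? 1)%nat eqn:E.
    + rewrite Ea, Rplus_0_r, gn_self. lra.
    + pose proof (Hcont a Ha' E 0 ltac:(lra) Hp').
      rewrite <- (Hsh0 a Ea). change (gn rho (Vf re rho c v s n w0 tau (h ++ [a]) i) (wealth c w0 i (h ++ [a]))) with (Gf re rho c v s n w0 tau (h ++ [a]) i). lra.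
Qed.

Lemma bernoulli p k : 0 <= p <= 1 -> 1 - INR k * p <= (1 - p) ^ k.
Proof.
  intros Hp. induction k; [simpl; lra|].
  rewrite S_INR. simpl pow. assert (0 <= (1-p)^k) by (apply pow_le; lra).
  assert (0 <= INR k) by apply pos_INR. nra.
Qed.

Definition pi0 U d := (U / 2 - d) / (U - d).
Definition pi1 U d := - d / (2 * (U - d)).
Definition rho0 U d (nn : nat) := (1 - pi0 U d) / INR nn * pi1 U d.

Lemma rho0_bounds U d nn : 0 < U -> d < 0 -> (1 <= nn)%nat -> 0 < rho0 U d nn < 1.
Proof.
  intros HU Hd Hn. unfold rho0, pi0, pi1.
  assert (1 <= INR nn) by (change 1 with (INR 1); apply le_INR; auto).
  assert (A : 0 < 1 - (U / 2 - d) / (U - d) < 1).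
  { split; apply Rmult_lt_reg_r with (U - d); try lra; unfold Rdiv;
    rewrite ?Rmult_minus_distr_r, ?Rmult_assoc, ?Rinv_l by lra; lra. }
  assert (B : 0 < - d / (2 * (U - d)) < 1).
  { split. apply Rdiv_lt_0_compat; lra. apply Rmult_lt_reg_r with (2 * (U - d)); [lra|].
    unfold Rdiv; rewrite Rmult_assoc, Rinv_l by lra; lra. }
  assert (C : 0 < (1 - (U / 2 - d) / (U - d)) / INR nn <= 1 - (U / 2 - d) / (U - d)).
  { split. apply Rdiv_lt_0_compat; lra. unfold Rdiv.
    rewrite <- (Rmult_1_r (1 - (U / 2 - d) / (U - d))) at 2. apply Rmult_le_compat_l; [lra|].
    rewrite <- Rinv_1. apply Rinv_le_contravar; lra. }
  split; [apply Rmult_lt_0_compat; lra|]. nra.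
Qed.

Lemma core (U d M p G gB gN : R) (k nn : nat) :
  0 < U -> d < 0 -> 0 <= M -> (1 <= k)%nat -> (k <= nn)%nat -> 0 <= p <= 1 ->
  G = p * gB + (1 - p) * gN -> gB <= G -> gN <= G ->
  gB <= (1 - p) ^ k * U + (1 - (1 - p) ^ k) * (d + M) ->
  gN <= (1 - INR k * p * (1 - p) ^ (pred k)) * M ->
  2 * ((1 - p) ^ k * U + (1 - (1 - p) ^ k) * d) <= U ->
  G <= M + d / 2 \/ G <= (1 - rho0 U d nn) * M.
Proof.
  intros HU Hd HM Hk Hkn Hp HG HB HN HBu HNu Hs.
  assert (Hkk : k = S (pred k)) by lia.
  set (pi := (1 - p) ^ k) in *.
  assert (Hpi0 : 0 <= pi) by (apply pow_le; lra).
  assert (E0 : pi0 U d * (U - d) = U / 2 - d) by (unfold pi0; field; lra).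
  assert (E1 : pi1 U d * (U - d) = - d / 2) by (unfold pi1; field; lra).
  assert (Hle0 : pi <= pi0 U d).
  { apply Rmult_le_reg_r with (U - d); [lra|]. rewrite E0. lra. }
  assert (HINk : 1 <= INR k) by (change 1 with (INR 1); apply le_INR; auto).
  assert (HINn : INR k <= INR nn) by (apply le_INR; auto).
  assert (Hpi0lt : pi0 U d < 1).
  { apply Rmult_lt_reg_r with (U - d); [lra|]. rewrite E0. lra. }
  pose proof (bernoulli p k Hp) as Hb. fold pi in Hb.
  set (pm := (1 - pi0 U d) / INR nn).
  assert (Hpm : pm <= p).
  { unfold pm. apply Rmult_le_reg_r with (INR nn); [lra|]. unfold Rdiv.
    rewrite Rmult_assoc, Rinv_l by lra. nra. }
  assert (Hpm0 : 0 < pm) by (unfold pm; apply Rdiv_lt_0_compat; lra).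
  assert (Hp0 : 0 < p) by lra.
  assert (HGB : G <= gB).
  { assert ((1 - p) * gN <= (1 - p) * G) by (apply Rmult_le_compat_l; lra).
    assert (p * G <= p * gB) by lra. apply Rmult_le_reg_l with p; auto. }
  assert (Hpi1 : 0 < pi1 U d) by (unfold pi1; apply Rdiv_lt_0_compat; lra).
  destruct (Rle_dec pi (pi1 U d)) as [Hc|Hc].
  - left. assert (pi * M >= 0) by nra.
    assert (pi * (U - d) <= pi1 U d * (U - d)) by (apply Rmult_le_compat_r; lra). lra.
  - right. apply Rnot_le_lt in Hc.
    assert (Hp1 : p < 1).
    { destruct (Req_dec p 1) as [E|E]; [|lra]. exfalso. unfold pi in Hc. rewrite E, Hkk in Hc.
      simpl in Hc. lra. }
    assert (HGN : G <= gN).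
    { assert (p * gB <= p * G) by (apply Rmult_le_compat_l; lra).
      assert ((1 - p) * G <= (1 - p) * gN) by lra. apply Rmult_le_reg_l with (1 - p); lra. }
    set (pp := (1 - p) ^ pred k).
    assert (Hpp : pi = pp * (1 - p)) by (unfold pi, pp; rewrite Hkk at 1; simpl; ring).
    assert (Hpp0 : 0 <= pp) by (apply pow_le; lra).
    assert (Hr1 : p * pi <= INR k * p * pp).
    { rewrite Hpp. assert (pp * (1 - p) <= pp) by nra. assert (p * pp <= INR k * p * pp) by nra. nra. }
    assert (Hr2 : rho0 U d nn <= p * pi).
    { unfold rho0. fold pm. apply Rmult_le_compat; lra. }
    assert ((1 - INR k * p * pp) * M <= (1 - rho0 U d nn) * M) by (apply Rmult_le_compat_r; lra).
    unfold pp in *. lra.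
Qed.

Lemma nbids_le_length a : (nbids a <= length a)%nat.
Proof. induction a as [|b a IH]; simpl; auto. destruct b; [rewrite nbids_t| rewrite nbids_f]; lia. Qed.

Lemma first_active act : (1 <= nbids act)%nat -> exists j, (j < length act)%nat /\ nth j act false = true.
Proof.
  induction act as [|b act IH]; intros H; [change (nbids []) with 0%nat in H; lia|].
  destruct b.
  - exists 0%nat. split; [simpl; lia| reflexivity].
  - rewrite nbids_f in H. destruct (IH H) as [j [H1 H2]]. exists (S j); simpl; split; auto; lia.
Qed.

Lemma two_active act : (2 <= nbids act)%nat -> exists j1 j2, j1 <> j2 /\ (j1 < length act)%nat /\ (j2 < length act)%nat /\
  nth j1 act false = true /\ nth j2 act false = true.
Proof.
  induction act as [|b act IH]; intros H; [change (nbids []) with 0%nat in H; lia|].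
  destruct b.
  - rewrite nbids_t in H. destruct (first_active act ltac:(lia)) as [j [H1 H2]].
    exists 0%nat, (S j). simpl. repeat split; auto; lia.
  - rewrite nbids_f in H. destruct (IH H) as [j1 [j2 [H1 [H2 [H3 [H4 H5]]]]]].
    exists (S j1), (S j2). simpl. repeat split; auto; lia.
Qed.

Lemma sum_one {X} (f : X -> R) l y : (forall x, In x l -> 0 <= f x) -> In y l -> f y <= sumR f l.
Proof.
  induction l as [|z l IH]; intros H Hy; [destruct Hy|]. simpl. destruct Hy as [<-|Hy].
  - assert (0 <= sumR f l); [|lra]. rewrite <- (sumR_const0 l). apply sumR_le. intros; apply H; right; auto.
  - pose proof (H z (or_introl eq_refl)). pose proof (IH (fun x Hx => H x (or_intror Hx)) Hy). lra.
Qed.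

Lemma sum_two {X} (f : X -> R) l x y : (forall z, In z l -> 0 <= f z) -> x <> y -> In x l -> In y l -> f x + f y <= sumR f l.
Proof.
  induction l as [|z l IH]; intros H Hxy Hx Hy; [destruct Hx|]. simpl.
  assert (H' : forall w, In w l -> 0 <= f w) by (intros; apply H; right; auto).
  destruct Hx as [<-|Hx]; destruct Hy as [<-|Hy]; try congruence.
  - pose proof (sum_one f l y H' Hy). lra.
  - pose proof (sum_one f l x H' Hx). lra.
  - pose proof (IH H' Hxy Hx Hy). pose proof (H z (or_introl eq_refl)). lra.
Qed.

Lemma valid_nil re n : valid_hist re n [].
Proof. exact I. Qed.

Lemma all_zero re rho c v s n w0 tau : 0 < c -> c < v - s -> rho <= 0 -> (2 <= n)%nat ->
  SSPE re rho c v s n w0 tau ->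
  forall h j, valid_hist re n h -> (j < n)%nat -> Gf re rho c v s n w0 tau h j = 0.
Proof.
  intros Hc Hcv Hr Hn HS.
  set (A := fun g => exists h j, valid_hist re n h /\ (j < n)%nat /\ g = Gf re rho c v s n w0 tau h j).
  destruct (completeness A) as [M [HMub HMl]].
  { exists (u rho (v - s)). intros g [h [j [Hv [Hj ->]]]]. apply Gf_bounds; auto. }
  { exists (Gf re rho c v s n w0 tau [] 0). exists [], 0%nat. split; [apply valid_nil| split; [lia| reflexivity]]. }
  assert (HM : forall h j, valid_hist re n h -> (j < n)%nat -> Gf re rho c v s n w0 tau h j <= M).
  { intros h j Hv Hj. apply HMub. exists h, j; auto. }
  assert (HM0 : 0 <= M).
  { pose proof (Gf_bounds re rho c v s n w0 tau [] 0 Hc Hcv Hr HS (valid_nil re n) ltac:(lia)).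
    pose proof (HM [] 0%nat (valid_nil re n) ltac:(lia)). lra. }
  set (U := u rho (v - s - c)). set (d := u rho (- c)).
  assert (HU : 0 < U) by (apply u_pos; lra).
  assert (Hd : d < 0) by (apply u_neg; lra).
  pose proof (rho0_bounds U d n HU Hd ltac:(lia)) as Hrho.
  set (Mb := Rmax (M + d / 2) ((1 - rho0 U d n) * M)).
  assert (Hall : forall h j, valid_hist re n h -> (j < n)%nat -> Gf re rho c v s n w0 tau h j <= Mb).
  { intros h j Hv Hj.
    assert (Hw : WF n h) by (eapply valid_WF; eauto).
    assert (Hla : length (active re n h) = n) by (apply length_active; auto).
    destruct (nth j (active re n h) false) eqn:Ea.
    - destruct (local_facts re rho c v s n w0 tau h j M Hc Hcv Hr Hn HS Hv Hj Ea HM) as [gB [gN [H1 [H2 [H3 [H4 [H5 H6]]]]]]].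
      pose proof (nactive_ge2 re n h Hn) as H2a.
      destruct (two_active _ H2a) as [j1 [j2 [Hne [Hj1 [Hj2 [Ha1 Ha2]]]]]]. rewrite Hla in Hj1, Hj2.
      destruct (local_facts re rho c v s n w0 tau h j1 M Hc Hcv Hr Hn HS Hv Hj1 Ha1 HM) as [gB1 [gN1 [_ [K1 [_ [L1 _]]]]]].
      destruct (local_facts re rho c v s n w0 tau h j2 M Hc Hcv Hr Hn HS Hv Hj2 Ha2 HM) as [gB2 [gN2 [_ [K2 [_ [L2 _]]]]]].
      pose proof (Gf_surplus re rho c v s n w0 tau h Hc Hcv Hr HS Hv) as Hsur.
      pose proof (sum_two (fun j => Gf re rho c v s n w0 tau h j) (seq 0 n) j1 j2
        ltac:(intros z Hz; apply in_seq in Hz; apply Gf_bounds; auto; lia) Hne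
        ltac:(apply in_seq; lia) ltac:(apply in_seq; lia)) as Hst.
      pose proof (nbids_le_length (active re n h)). rewrite Hla in H.
      destruct (core U d M (tau h) (Gf re rho c v s n w0 tau h j) gB gN (nbids (active re n h) - 1) n HU Hd HM0
        ltac:(lia) ltac:(lia) (proj1 HS h) H1 H2 H3 H5 H6 ltac:(change U with (u rho (v - s - c)); change d with (u rho (- c)); lra)) as [Hc1|Hc1];
      unfold Mb; [eapply Rle_trans; [exact Hc1| apply Rmax_l] | eapply Rle_trans; [exact Hc1| apply Rmax_r]].
    - assert (Gf re rho c v s n w0 tau h j = 0).
      { unfold Gf. rewrite (Gf_inactive re rho c v s n w0 tau h j Hc Hcv Hr HS Hv Hj Ea). apply gn_self. }
      rewrite H. unfold Mb. eapply Rle_trans; [|apply Rmax_r]. apply Rmult_le_pos; lra. }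
  assert (HMle : M <= Mb).
  { apply HMl. intros g [h [j [Hv [Hj ->]]]]. apply Hall; auto. }
  assert (HM00 : M <= 0).
  { destruct (Rle_dec M 0) as [E|E]; auto. exfalso. unfold Mb in HMle.
    apply Rnot_le_lt in E. assert (0 < rho0 U d n * M) by (apply Rmult_lt_0_compat; lra).
    destruct (Rle_dec (M + d / 2) ((1 - rho0 U d n) * M)).
    - rewrite Rmax_right in HMle by auto. lra.
    - rewrite Rmax_left in HMle by lra. lra. }
  intros h j Hv Hj. pose proof (HM h j Hv Hj). pose proof (Gf_bounds re rho c v s n w0 tau h j Hc Hcv Hr HS Hv Hj). lra.
Qed.

Lemma uniq re rho c v s n w0 tau : 0 < c -> c < v - s -> rho <= 0 -> (2 <= n)%nat ->
  SSPE re rho c v s n w0 tau ->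
  (forall h, valid_hist re n h -> forall i, (i < n)%nat ->
     has_value re rho c v s n w0 (fun _ => tau) i h (Fin (u rho (wealth c w0 i h)))) /\
  (forall h, valid_hist re n h -> tau h = pstar rho c v s (nbids (active re n h)) /\ 0 < tau h < 1).
Proof.
  intros Hc Hcv Hr Hn HS. pose proof (all_zero re rho c v s n w0 tau Hc Hcv Hr Hn HS) as HZ.
  split.
  - intros h Hv i Hi. destruct (Vf_spec re rho c v s n w0 tau h i Hc Hcv Hr HS Hv Hi) as [H1 _].
    replace (u rho (wealth c w0 i h)) with (Vf re rho c v s n w0 tau h i); auto.
    pose proof (HZ h i Hv Hi). unfold Gf, gn in H. pose proof (EE_pos rho (wealth c w0 i h)).
    unfold Rdiv in H. apply Rmult_integral in H. destruct H as [H|H]; [lra|].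
    exfalso; apply (Rinv_neq_0_compat _ (Rgt_not_eq _ _ H0)); auto.
  - intros h Hv.
    assert (Hw : WF n h) by (eapply valid_WF; eauto).
    assert (Hla : length (active re n h) = n) by (apply length_active; auto).
    pose proof (nactive_ge2 re n h Hn) as H2a.
    destruct (first_active (active re n h) ltac:(lia)) as [i [Hi Ha]]. rewrite Hla in Hi.
    destruct (local_facts re rho c v s n w0 tau h i 0 Hc Hcv Hr Hn HS Hv Hi Ha
       ltac:(intros; rewrite HZ; auto; lra)) as [gB [gN [H1 [H2 [H3 [H4 [H5 H6]]]]]]].
    rewrite (HZ h i Hv Hi) in H1, H2, H3.
    set (m := nbids (active re n h)) in *.
    set (p := tau h) in *.
    set (k := (m - 1)%nat) in *.
    assert (Hk : k = S (pred k)) by (unfold k; lia).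
    set (U := u rho (v - s - c)) in *. set (d := u rho (- c)) in *.
    assert (HU : 0 < U) by (apply u_pos; lra).
    assert (Hd : d < 0) by (apply u_neg; lra).
    assert (Hp : 0 <= p <= 1) by apply (proj1 HS).
    set (pi := (1 - p) ^ k) in *.
    assert (HgB : gB = pi * U + (1 - pi) * d) by lra.
    assert (Hp0 : p <> 0).
    { intro E. assert (pi = 1) by (unfold pi; rewrite E; replace (1 - 0) with 1 by ring; apply pow1). nra. }
    assert (Hp1 : p <> 1).
    { intro E. assert (pi = 0) by (unfold pi; rewrite E, Hk; simpl; ring). rewrite E in H1. nra. }
    assert (Hpp : 0 < p < 1) by lra.
    assert (HgB0 : gB = 0).
    { assert (p * gB <= 0) by nra. assert ((1 - p) * gN <= 0) by nra.
      assert (Hz : p * gB = 0) by lra. apply Rmult_integral in Hz. destruct Hz; [lra|auto]. }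
    assert (HU' : U = d + EE rho (- c) * u rho (v - s)).
    { unfold U, d. rewrite <- u_add. f_equal; ring. }
    assert (Hd' : 0 = d + EE rho (- c) * u rho c).
    { unfold d. rewrite <- u_add. replace (-c + c) with 0 by ring. symmetry; apply u_0. }
    assert (Hpix : pi = xr rho c v s).
    { unfold xr. pose proof (EE_pos rho (-c)). pose proof (u_pos rho (v - s) Hr ltac:(lra)).
      apply Rmult_eq_reg_r with (EE rho (-c) * u rho (v - s)); [|nra].
      field_simplify; [|lra]. nra. }
    split; [|auto].
    unfold pstar. fold (xr rho c v s). rewrite <- Hpix. fold k.
    unfold pi. rewrite <- Rpower_pow by lra. rewrite Rpower_mult.
    replace (INR k * (1 / INR k)) with 1 by (field; apply not_0_INR; lia).
    rewrite Rpower_1 by lra. ring.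
Qed.

Theorem theorem1 (n : nat) (v c s rho : R) (w0 : nat -> R) :
  (2 <= n)%nat -> 0 < v -> 0 < c -> 0 <= s -> c < v - s -> rho <= 0 ->
  (* with re-entry *)
  (SSPE true rho c v s n w0 (fun _ => pstar rho c v s n) /\
   forall tau, SSPE true rho c v s n w0 tau ->
     (forall h, valid_hist true n h -> forall i, (i < n)%nat ->
        has_value true rho c v s n w0 (fun _ => tau) i h
          (Fin (u rho (wealth c w0 i h)))) /\
     (forall h, valid_hist true n h ->
        tau h = pstar rho c v s n /\ 0 < tau h < 1)) /\
  (* without re-entry *)
  (SSPE false rho c v s n w0 (fun h => pstar rho c v s (nactive false n h)) /\
   forall tau, SSPE false rho c v s n w0 tau ->
     (forall h, valid_hist false n h -> forall i, (i < n)%nat ->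
        has_value false rho c v s n w0 (fun _ => tau) i h
          (Fin (u rho (wealth c w0 i h)))) /\
     (forall h, valid_hist false n h ->
        tau h = pstar rho c v s (nactive false n h) /\ 0 < tau h < 1)).
Proof.
  intros Hn Hv Hc Hs Hcv Hr.
  assert (Hact : forall h, nbids (active true n h) = n) by (intros; rewrite active_re; apply nbids_repeat).
  split; split.
  - apply cand_SSPE; auto; intros h; rewrite Hact; auto.
  - intros tau HS. destruct (uniq true rho c v s n w0 tau Hc Hcv Hr Hn HS) as [H1 H2].
    split; [exact H1|]. intros h Hh. rewrite <- (Hact h). auto.
  - apply cand_SSPE; auto.
  - intros tau HS. destruct (uniq false rho c v s n w0 tau Hc Hcv Hr Hn HS) as [H1 H2]. split; auto.
Qed.
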